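(* $\mathsf{RCA}_0$ proves: for every injective $f:\mathbb{N}\setminus\{0\}\to\mathbb{N}$, either the range of $f$ exists as a set, or every infinite subset of $T_f$ contains a sequence $(s^n)_{n\in\mathbb{N}}$ such that (a) the lengths $|s^n|$ are strictly increasing; (b) each $s^m$ is a weak extension of every $s^n$ with $n<m$; (c) $s^n<s^{n+1}$ holds for infinitely many $n$; (d) the sequence is strictly ascending in the Kleene–Brouwer order.
   Context: For injective $f:\mathbb{N}\setminus\{0\}\to\mathbb{N}$, $T_f\subseteq\mathbb{N}^*$ consists of the finite sequences $s$ such that (i) $f(s_i)=i$ for all $i<|s|$ with $s_i>0$, and (ii) for all $i<|s|$, if some $j<|s|$ has $f(j)=i$, then $s_i>0$. It is ordered by the Kleene–Brouwer order: $s<t$ iff either $|s|>|t|$ and $s_i=t_i$ for all $i<|t|$, or there is $i<\min(|s|,|t|)$ with $s_i<t_i$ and $s_j=t_j$ for all $j<i$. A sequence $t$ is a weak extension of $s$ if $|s|\le|t|$ and $s_i=t_i$ for every $i<|s|$ with $s_i>0$. *)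

(* Defs.v *)
(* "RCA_0 proves phi" is rendered semantically (by Goedel's
   completeness theorem, equivalently): phi holds in every L_2-structure
   (possibly nonstandard first-order part, arbitrary second-order part)
   satisfying the axioms of RCA_0. *)

Record L2str := {
  Num : Type;
  Set2 : Type;
  mem : Num -> Set2 -> Prop;
  zero : Num;
  one : Num;
  add : Num -> Num -> Num;
  mul : Num -> Num -> Num;
  lt : Num -> Num -> Prop
}.

(* ---------- syntax of L_2 formulas (number quantifiers only;
   free set variables act as set parameters) ---------- *)
Inductive term :=
| tvar (n : nat) | tzero | tone | tadd (a b : term) | tmul (a b : term).

Inductive form :=
| feq (a b : term) | flt (a b : term) | fmem (a : term) (X : nat)
| fnot (p : form) | fand (p q : form) | for_ (p q : form) | fimp (p q : form)
| fex (p : form) | fall (p : form)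
| fexb (t : term) (p : form)    (* exists x < t, p   (t read outside the binder) *)
| fallb (t : term) (p : form).

Definition scons {A : Type} (x : A) (e : nat -> A) : nat -> A :=
  fun n => match n with 0 => x | S k => e k end.

Section Sem.
Variable M : L2str.

Fixpoint teval (e : nat -> Num M) (t : term) : Num M :=
  match t with
  | tvar n => e n
  | tzero => zero M
  | tone => one M
  | tadd a b => add M (teval e a) (teval e b)
  | tmul a b => mul M (teval e a) (teval e b)
  end.

Fixpoint sat (e : nat -> Num M) (E : nat -> Set2 M) (p : form) : Prop :=
  match p with
  | feq a b => teval e a = teval e b
  | flt a b => lt M (teval e a) (teval e b)
  | fmem a X => mem M (teval e a) (E X)
  | fnot p => ~ sat e E p
  | fand p q => sat e E p /\ sat e E q
  | for_ p q => sat e E p \/ sat e E q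
  | fimp p q => sat e E p -> sat e E q
  | fex p => exists x, sat (scons x e) E p
  | fall p => forall x, sat (scons x e) E p
  | fexb t p => exists x, lt M x (teval e t) /\ sat (scons x e) E p
  | fallb t p => forall x, lt M x (teval e t) -> sat (scons x e) E p
  end.
End Sem.

Inductive Delta0 : form -> Prop :=
| D_eq a b : Delta0 (feq a b)
| D_lt a b : Delta0 (flt a b)
| D_mem a X : Delta0 (fmem a X)
| D_not p : Delta0 p -> Delta0 (fnot p)
| D_and p q : Delta0 p -> Delta0 q -> Delta0 (fand p q)
| D_or p q : Delta0 p -> Delta0 q -> Delta0 (for_ p q)
| D_imp p q : Delta0 p -> Delta0 q -> Delta0 (fimp p q)
| D_exb t p : Delta0 p -> Delta0 (fexb t p)
| D_allb t p : Delta0 p -> Delta0 (fallb t p).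

Definition Sigma01 (p : form) : Prop := exists q, Delta0 q /\ p = fex q.
Definition Pi01 (p : form) : Prop := exists q, Delta0 q /\ p = fall q.

Record RCA0 (M : L2str) : Prop := {
  ax_succ_ne0 : forall m, add M m (one M) <> zero M;
  ax_succ_inj : forall m n, add M m (one M) = add M n (one M) -> m = n;
  ax_add0 : forall m, add M m (zero M) = m;
  ax_addS : forall m n, add M m (add M n (one M)) = add M (add M m n) (one M);
  ax_mul0 : forall m, mul M m (zero M) = zero M;
  ax_mulS : forall m n, mul M m (add M n (one M)) = add M (mul M m n) m;
  ax_lt0 : forall m, ~ lt M m (zero M);
  ax_ltS : forall m n, lt M m (add M n (one M)) <-> (lt M m n \/ m = n);
  ax_ind : forall p, Sigma01 p -> forall e E,
      sat M (scons (zero M) e) E p ->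
      (forall n, sat M (scons n e) E p -> sat M (scons (add M n (one M)) e) E p) ->
      forall n, sat M (scons n e) E p;
  ax_comp : forall p q, Sigma01 p -> Pi01 q -> forall e E,
      (forall n, sat M (scons n e) E p <-> sat M (scons n e) E q) ->
      exists X : Set2 M, forall n, mem M n X <-> sat M (scons n e) E p
}.

Section Coding.
Variable M : L2str.
Local Notation N := (Num M).
Local Notation "x + y" := (add M x y).
Local Notation "x * y" := (mul M x y).
Local Notation "x < y" := (lt M x y).
Local Notation "0" := (zero M).
Local Notation "1" := (one M).
Definition le (x y : N) : Prop := x < y \/ x = y.

Definition pair (i j : N) : N := (i + j) * (i + j) + i.

Definition Rem (a m v : N) : Prop := v < m /\ exists q, a = q * m + v.

(* Goedel beta-function coding of finite sequences: the number
   pair l (pair a d) stands for the sequence of length l whose i-th entry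
   is  a mod (1 + (i+1) d). *)
Definition Len (c l : N) : Prop := exists a d, c = pair l (pair a d).
Definition Entry (c i v : N) : Prop :=
  exists l a d, c = pair l (pair a d) /\ i < l /\ Rem a (1 + (i + 1) * d) v.
Definition SameSeq (c c' : N) : Prop :=
  exists l, Len c l /\ Len c' l /\
    forall i v, i < l -> (Entry c i v <-> Entry c' i v).
(* canonical code: the least number coding the given sequence *)
Definition SeqCode (c : N) : Prop :=
  (exists l, Len c l) /\ forall c', c' < c -> ~ SameSeq c' c.

(* f : N \ {0} -> N, given as a set F of pairs (j, f(j)) *)
Definition InjFun (F : Set2 M) : Prop :=
  (forall x, mem M x F -> exists j i, j <> 0 /\ x = pair j i) /\
  (forall j, j <> 0 -> exists i, mem M (pair j i) F) /\
  (forall j i i', mem M (pair j i) F -> mem M (pair j i') F -> i = i') /\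
  (forall j j' i, mem M (pair j i) F -> mem M (pair j' i) F -> j = j').

Definition RangeExists (F : Set2 M) : Prop :=
  exists R : Set2 M, forall i, mem M i R <-> exists j, mem M (pair j i) F.

Definition InTf (F : Set2 M) (s : N) : Prop :=
  SeqCode s /\ exists l, Len s l /\
   (forall i v, i < l -> Entry s i v -> v <> 0 -> mem M (pair v i) F) /\
   (forall i, i < l -> (exists j, j < l /\ mem M (pair j i) F) ->
       forall v, Entry s i v -> v <> 0).

Definition KB (s t : N) : Prop :=
  exists ls lt_, Len s ls /\ Len t lt_ /\
  ( (lt_ < ls /\ forall i v, i < lt_ -> (Entry s i v <-> Entry t i v))
  \/ exists i, i < ls /\ i < lt_ /\
       (exists v w, Entry s i v /\ Entry t i w /\ v < w) /\
       (forall j v, j < i -> (Entry s j v <-> Entry t j v)) ).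

Definition WeakExt (s t : N) : Prop :=
  exists ls lt_, Len s ls /\ Len t lt_ /\ le ls lt_ /\
  forall i v, i < ls -> Entry s i v -> v <> 0 -> Entry t i v.

Definition Subset (X : Set2 M) (P : N -> Prop) : Prop :=
  forall x, mem M x X -> P x.
Definition Infinite (X : Set2 M) : Prop :=
  forall m, exists x, m < x /\ mem M x X.

(* Y codes a sequence n |-> s^n (a total function, as a set of pairs) *)
Definition IsSeqOfCodes (Y : Set2 M) : Prop :=
  (forall n, exists s, mem M (pair n s) Y) /\
  (forall n s s', mem M (pair n s) Y -> mem M (pair n s') Y -> s = s').

Definition GoodSeq (X Y : Set2 M) : Prop :=
  IsSeqOfCodes Y /\
  (forall n s, mem M (pair n s) Y -> mem M s X) /\
  (forall n m s t ls lt_, n < m -> mem M (pair n s) Y -> mem M (pair m t) Y ->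
      Len s ls -> Len t lt_ -> ls < lt_) /\
  (forall n m s t, n < m -> mem M (pair n s) Y -> mem M (pair m t) Y ->
      WeakExt s t) /\
  (forall k, exists n s t, k < n /\ mem M (pair n s) Y /\
      mem M (pair (n + 1) t) Y /\ KB s t) /\
  (forall n m s t, n < m -> mem M (pair n s) Y -> mem M (pair m t) Y -> KB s t).
End Coding.

(* Main.v *)
Require Import Defs.
From Stdlib Require Import Classical Setoid Morphisms Ring.

Module P1.

Definition up (r : nat -> nat) : nat -> nat :=
  fun k => match k with 0 => 0 | S k => S (r k) end.
Fixpoint tren (r : nat -> nat) (t : term) : term :=
  match t with
  | tvar n => tvar (r n) | tzero => tzero | tone => tone
  | tadd a b => tadd (tren r a) (tren r b)
  | tmul a b => tmul (tren r a) (tren r b) end.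
Fixpoint fren (r : nat -> nat) (p : form) : form :=
  match p with
  | feq a b => feq (tren r a) (tren r b)
  | flt a b => flt (tren r a) (tren r b)
  | fmem a X => fmem (tren r a) X
  | fnot p => fnot (fren r p)
  | fand p q => fand (fren r p) (fren r q)
  | for_ p q => for_ (fren r p) (fren r q)
  | fimp p q => fimp (fren r p) (fren r q)
  | fex p => fex (fren (up r) p)
  | fall p => fall (fren (up r) p)
  | fexb t p => fexb (tren r t) (fren (up r) p)
  | fallb t p => fallb (tren r t) (fren (up r) p) end.

Lemma D0_ren : forall p r, Delta0 p -> Delta0 (fren r p).
Proof. intros p r H; revert r; induction H; intros; simpl; constructor; auto. Qed.

Section Syn.
Variable M : L2str.
Lemma teval_ren : forall e r t, teval M e (tren r t) = teval M (fun k => e (r k)) t.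
Proof. induction t; simpl; congruence. Qed.
Lemma teval_ext : forall e e' t, (forall k, e k = e' k) -> teval M e t = teval M e' t.
Proof. induction t; simpl; intros; try congruence; auto. rewrite IHt1, IHt2; auto. rewrite IHt1, IHt2; auto. Qed.
Lemma sat_ext : forall p e e' E, (forall k, e k = e' k) -> (sat M e E p <-> sat M e' E p).
Proof.
  induction p; simpl; intros e e' E H;
  repeat match goal with |- context [teval M e ?t] => rewrite (teval_ext e e' t H) end;
  try tauto.
  - rewrite (IHp e e' E H); tauto.
  - rewrite (IHp1 e e' E H), (IHp2 e e' E H); tauto.
  - rewrite (IHp1 e e' E H), (IHp2 e e' E H); tauto.
  - rewrite (IHp1 e e' E H), (IHp2 e e' E H); tauto.
  - split; intros [x Hx]; exists x; [rewrite <- (IHp (scons x e) (scons x e') E) | rewrite (IHp (scons x e) (scons x e') E)]; auto; intros [|k]; simpl; auto.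
  - split; intros Hx x; [rewrite <- (IHp (scons x e) (scons x e') E) | rewrite (IHp (scons x e) (scons x e') E)]; auto; intros [|k]; simpl; auto.
  - split; intros [x [Hl Hx]]; exists x; split; auto; [rewrite <- (IHp (scons x e) (scons x e') E) | rewrite (IHp (scons x e) (scons x e') E)]; auto; intros [|k]; simpl; auto.
  - split; intros Hx x Hl; [rewrite <- (IHp (scons x e) (scons x e') E) | rewrite (IHp (scons x e) (scons x e') E)]; auto; intros [|k]; simpl; auto.
Qed.
Lemma sat_ren : forall p r e E, sat M e E (fren r p) <-> sat M (fun k => e (r k)) E p.
Proof.
  induction p; simpl; intros r e E; repeat rewrite teval_ren; try tauto.
  - rewrite IHp; tauto.
  - rewrite IHp1, IHp2; tauto.
  - rewrite IHp1, IHp2; tauto.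
  - rewrite IHp1, IHp2; tauto.
  - split; intros [x Hx]; exists x; revert Hx; rewrite IHp; apply sat_ext; intros [|k]; reflexivity.
  - split; intros Hx x; specialize (Hx x); revert Hx; rewrite IHp; apply sat_ext; intros [|k]; reflexivity.
  - split; intros [x [Hl Hx]]; exists x; split; auto; revert Hx; rewrite IHp; apply sat_ext; intros [|k]; reflexivity.
  - split; intros Hx x Hl; specialize (Hx x Hl); revert Hx; rewrite IHp; apply sat_ext; intros [|k]; reflexivity.
Qed.
Lemma sat_ren_ext : forall p r e e' E, (forall k, e (r k) = e' k) ->
  (sat M e E (fren r p) <-> sat M e' E p).
Proof. intros. rewrite sat_ren. apply sat_ext. auto. Qed.
End Syn.

(* ---------- DSL with de Bruijn levels ---------- *)
Definition pt := nat -> term.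
Definition pf := nat -> form.
Definition pv (l : nat) : pt := fun d => tvar (d - l - 1).
Definition pp (p : nat) : pt := fun d => tvar (d + p).
Definition pz : pt := fun _ => tzero.
Definition po : pt := fun _ => tone.
Definition padd (a b : pt) : pt := fun d => tadd (a d) (b d).
Definition pmul (a b : pt) : pt := fun d => tmul (a d) (b d).
Definition pS (a : pt) : pt := padd a po.
Definition PEq (a b : pt) : pf := fun d => feq (a d) (b d).
Definition PLt (a b : pt) : pf := fun d => flt (a d) (b d).
Definition PMem (a : pt) (X : nat) : pf := fun d => fmem (a d) X.
Definition PNot (p : pf) : pf := fun d => fnot (p d).
Definition PAnd (p q : pf) : pf := fun d => fand (p d) (q d).
Definition POr (p q : pf) : pf := fun d => for_ (p d) (q d).
Definition PImp (p q : pf) : pf := fun d => fimp (p d) (q d).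
Definition PEx (b : nat -> pf) : pf := fun d => fex (b d (S d)).
Definition PAll (b : nat -> pf) : pf := fun d => fall (b d (S d)).
Definition PExb (t : pt) (b : nat -> pf) : pf := fun d => fexb (t d) (b d (S d)).
Definition PAllb (t : pt) (b : nat -> pf) : pf := fun d => fallb (t d) (b d (S d)).
Definition PLe (a b : pt) : pf := POr (PLt a b) (PEq a b).
Definition ppair (a b : pt) : pt := padd (pmul (padd a b) (padd a b)) a.

Ltac dsl := cbv beta iota delta [PEq PLt PMem PNot PAnd POr PImp PEx PAll PExb PAllb PLe pv pp pz po padd pmul pS ppair].
Ltac d0 := dsl; simpl; repeat (constructor || apply D0_ren).

Lemma Sigma_fex : forall q, Delta0 q -> Sigma01 (fex q).
Proof. intros q H; exists q; split; auto. Qed.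
Lemma Pi_fall : forall q, Delta0 q -> Pi01 (fall q).
Proof. intros q H; exists q; split; auto. Qed.

Section Model.
Variable M : L2str.
Hypothesis HM : RCA0 M.
Local Notation N := (Num M).
Local Notation "x + y" := (add M x y).
Local Notation "x * y" := (mul M x y).
Local Notation "x < y" := (lt M x y).
Local Notation "0" := (zero M).
Local Notation "1" := (one M).

Lemma ind_S1 : forall p e E (P : N -> Prop), Sigma01 p ->
  (forall n, P n <-> sat M (scons n e) E p) ->
  P 0 -> (forall n, P n -> P (n + 1)) -> forall n, P n.
Proof.
  intros p e E P Hp HP H0 HS n. apply HP.
  apply (ax_ind M HM p Hp e E); [apply HP; auto|].
  intros m Hm. apply HP. apply HS. apply HP. auto.
Qed.

Lemma ind_D0 : forall p e E (P : N -> Prop), Delta0 p ->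
  (forall n, P n <-> sat M (scons n e) E p) ->
  P 0 -> (forall n, P n -> P (n + 1)) -> forall n, P n.
Proof.
  intros p e E P Hp HP. apply (ind_S1 (fex (fren S p)) e E P).
  - exists (fren S p); split; auto. apply D0_ren; auto.
  - intro n. rewrite HP. simpl. split.
    + intro H. exists 0. rewrite sat_ren. revert H. apply sat_ext. reflexivity.
    + intros [x H]. rewrite sat_ren in H. revert H. apply sat_ext. reflexivity.
Qed.

Lemma comp : forall p q e E (P : N -> Prop), Sigma01 p -> Pi01 q ->
  (forall n, P n <-> sat M (scons n e) E p) ->
  (forall n, P n <-> sat M (scons n e) E q) ->
  exists X, forall n, mem M n X <-> P n.
Proof.
  intros p q e E P Hp Hq H1 H2.
  destruct (ax_comp M HM p q Hp Hq e E) as [X HX].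
  - intro n. rewrite <- H1, <- H2. tauto.
  - exists X. intro n. rewrite HX, H1. tauto.
Qed.

End Model.

Lemma ex_iff' : forall (A : Type) (P Q : A -> Prop), (forall x, P x <-> Q x) -> ((exists x, P x) <-> (exists x, Q x)).
Proof. intros A P Q H; split; intros [x Hx]; exists x; apply H; auto. Qed.
Lemma all_iff' : forall (A : Type) (P Q : A -> Prop), (forall x, P x <-> Q x) -> ((forall x, P x) <-> (forall x, Q x)).
Proof. intros A P Q H; split; intros Hx x; apply H; auto. Qed.
Lemma and_iff' : forall A B C D : Prop, (A <-> C) -> (B <-> D) -> (A /\ B <-> C /\ D).
Proof. tauto. Qed.
Lemma or_iff' : forall A B C D : Prop, (A <-> C) -> (B <-> D) -> (A \/ B <-> C \/ D).
Proof. tauto. Qed.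
Lemma imp_iff' : forall A B C D : Prop, (A <-> C) -> (B <-> D) -> ((A -> B) <-> (C -> D)).
Proof. tauto. Qed.
Lemma not_iff' : forall A C : Prop, (A <-> C) -> (~ A <-> ~ C).
Proof. tauto. Qed.

Ltac walk := first
  [ reflexivity
  | apply sat_ren_ext; intros [|[|?]]; reflexivity
  | symmetry; apply sat_ren_ext; intros [|[|?]]; reflexivity
  | apply ex_iff'; intro; walk
  | apply all_iff'; intro; walk
  | apply and_iff'; walk
  | apply or_iff'; walk
  | apply imp_iff'; walk
  | apply not_iff'; walk ].

Definition mmP (D i : pt) : pt := padd po (pmul (pS i) D).
Definition RemP (a m v : pt) : pf := PAnd (PLt v m) (PExb (pS a) (fun q => PEq a (padd (pmul (pv q) m) v))).
Ltac dsl2 := cbv beta iota delta [PEq PLt PMem PNot PAnd POr PImp PEx PAll PExb PAllb PLe pv pp pz po padd pmul pS ppair mmP RemP].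
Ltac d02 := dsl2; simpl; repeat (constructor || apply D0_ren).
Definition EntryP (c i v : pt) : pf := PExb (pS c) (fun l => PExb (pS c) (fun a => PExb (pS c) (fun dd =>
  PAnd (PEq c (ppair (pv l) (ppair (pv a) (pv dd)))) (PAnd (PLt i (pv l)) (RemP (pv a) (mmP (pv dd) i) v))))).
Definition LenP (c l : pt) : pf := PExb (pS c) (fun a => PExb (pS c) (fun dd => PEq c (ppair l (ppair (pv a) (pv dd))))).
Ltac dsl3 := cbv beta iota delta [PEq PLt PMem PNot PAnd POr PImp PEx PAll PExb PAllb PLe pv pp pz po padd pmul pS ppair mmP RemP EntryP LenP].
Ltac d03 := dsl3; simpl; repeat (constructor || apply D0_ren || assumption).

End P1.
Import P1.

Module P2.

Set Default Proof Using "All".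
Section Arith.
Variable M : L2str.
Hypothesis HM : RCA0 M.
Variable S0 : Set2 M.
Local Notation N := (Num M).
Local Notation "x + y" := (add M x y).
Local Notation "x * y" := (mul M x y).
Local Notation "x < y" := (lt M x y).
Local Notation o0 := (zero M).
Local Notation o1 := (one M).

Definition EE : nat -> Set2 M := fun _ => S0.
Definition ee : nat -> N := fun _ => o0.

Ltac indD p e := 
  lazymatch goal with |- forall n, @?P n => 
   apply (ind_D0 M HM (p O) e EE P); [d0 | intros; reflexivity | | ] end.

Lemma add0l : forall n, o0 + n = n.
Proof.
  indD (PEq (padd pz (pp 0)) (pp 0)) ee.
  - apply (ax_add0 M HM).
  - intros n H. rewrite (ax_addS M HM), H. reflexivity.
Qed.
Lemma addSl : forall m n, (m + o1) + n = (m + n) + o1.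
Proof.
  intro m. indD (PEq (padd (pS (pp 1)) (pp 0)) (pS (padd (pp 1) (pp 0)))) (scons m ee).
  - rewrite !(ax_add0 M HM). reflexivity.
  - intros n H. rewrite !(ax_addS M HM), H. reflexivity.
Qed.
Lemma add_comm : forall m n, m + n = n + m.
Proof.
  intro m. indD (PEq (padd (pp 1) (pp 0)) (padd (pp 0) (pp 1))) (scons m ee).
  - rewrite (ax_add0 M HM), add0l. reflexivity.
  - intros n H. rewrite (ax_addS M HM), addSl, H. reflexivity.
Qed.
Lemma add_assoc : forall m n k, m + (n + k) = (m + n) + k.
Proof.
  intros m n. indD (PEq (padd (pp 1) (padd (pp 2) (pp 0))) (padd (padd (pp 1) (pp 2)) (pp 0))) (scons m (scons n ee)).
  - rewrite !(ax_add0 M HM). reflexivity.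
  - intros k H. rewrite !(ax_addS M HM), H. reflexivity.
Qed.
Lemma add_perm : forall a b c, (a + b) + c = (a + c) + b.
Proof. intros. rewrite <- !add_assoc, (add_comm b c). reflexivity. Qed.
Lemma mul0l : forall n, o0 * n = o0.
Proof.
  indD (PEq (pmul pz (pp 0)) pz) ee.
  - apply (ax_mul0 M HM).
  - intros n H. rewrite (ax_mulS M HM), H, (ax_add0 M HM). reflexivity.
Qed.
Lemma mulSl : forall m n, (m + o1) * n = m * n + n.
Proof.
  intro m. indD (PEq (pmul (pS (pp 1)) (pp 0)) (padd (pmul (pp 1) (pp 0)) (pp 0))) (scons m ee).
  - rewrite !(ax_mul0 M HM), (ax_add0 M HM). reflexivity.
  - intros n H. rewrite !(ax_mulS M HM), H.
    rewrite !add_assoc. f_equal. apply add_perm.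
Qed.
Lemma mul_comm : forall m n, m * n = n * m.
Proof.
  intro m. indD (PEq (pmul (pp 1) (pp 0)) (pmul (pp 0) (pp 1))) (scons m ee).
  - rewrite (ax_mul0 M HM), mul0l. reflexivity.
  - intros n H. rewrite (ax_mulS M HM), mulSl, H. reflexivity.
Qed.
Lemma distr : forall m n k, m * (n + k) = m * n + m * k.
Proof.
  intros m n. indD (PEq (pmul (pp 1) (padd (pp 2) (pp 0))) (padd (pmul (pp 1) (pp 2)) (pmul (pp 1) (pp 0)))) (scons m (scons n ee)).
  - rewrite (ax_add0 M HM), (ax_mul0 M HM), (ax_add0 M HM). reflexivity.
  - intros k H. rewrite (ax_addS M HM), !(ax_mulS M HM), H, add_assoc. reflexivity.
Qed.
Lemma mul_assoc : forall m n k, m * (n * k) = (m * n) * k.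
Proof.
  intros m n. indD (PEq (pmul (pp 1) (pmul (pp 2) (pp 0))) (pmul (pmul (pp 1) (pp 2)) (pp 0))) (scons m (scons n ee)).
  - rewrite !(ax_mul0 M HM). reflexivity.
  - intros k H. rewrite !(ax_mulS M HM), distr, H. reflexivity.
Qed.
Lemma mul1l : forall n, o1 * n = n.
Proof.
  intro n. rewrite <- (add0l o1), mulSl, mul0l, add0l. reflexivity.
Qed.
Lemma distr_l : forall n m p, (n + m) * p = n * p + m * p.
Proof. intros. rewrite !(mul_comm _ p). apply distr. Qed.

Definition Msrt : semi_ring_theory o0 o1 (add M) (mul M) eq :=
  mk_srt _ _ _ _ _ add0l add_comm add_assoc mul1l mul0l mul_comm mul_assoc distr_l.
Add Ring Mring : Msrt.

Lemma test_ring : forall a b, (a + b) * (a + b) = a * a + (o1 + o1) * a * b + b * b.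
Proof. intros. ring. Qed.

Ltac indS p e :=
  lazymatch goal with |- forall n, @?P n =>
   apply (ind_S1 M HM (p O) e EE P); [apply Sigma_fex; d0 | intros; reflexivity | | ] end.

Local Notation le := (le M).

Lemma cancel : forall m n k, m + k = n + k -> m = n.
Proof.
  intros m n. indD (PImp (PEq (padd (pp 1) (pp 0)) (padd (pp 2) (pp 0))) (PEq (pp 1) (pp 2))) (scons m (scons n ee)).
  - rewrite !(ax_add0 M HM). auto.
  - intros k H E. apply H. rewrite !(ax_addS M HM) in E. apply (ax_succ_inj M HM) in E. auto.
Qed.
Lemma cancel_l : forall m n k, k + m = k + n -> m = n.
Proof. intros m n k H. apply (cancel m n k). rewrite (add_comm m), (add_comm n). auto. Qed.

Lemma zs : forall n, n = o0 \/ exists p, n = p + o1.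
Proof.
  assert (H : forall n, exists x, n = o0 \/ n = x + o1).
  { indS (PEx (fun x => POr (PEq (pp 0) pz) (PEq (pp 0) (pS (pv x))))) ee.
    - exists o0; auto.
    - intros n _. exists n; auto. }
  intro n. destruct (H n) as [x [Hx|Hx]]; eauto.
Qed.

Lemma succ_ne0 : forall x, x + o1 <> o0.
Proof. apply (ax_succ_ne0 M HM). Qed.
Lemma lt0 : forall x, ~ x < o0.
Proof. apply (ax_lt0 M HM). Qed.
Lemma ltS : forall m n, m < n + o1 <-> (m < n \/ m = n).
Proof. apply (ax_ltS M HM). Qed.

Lemma ltE1 : forall x y, x < y -> exists z, y = x + z + o1.
Proof.
  intro x.
  assert (H : forall y, exists z, x < y -> y = x + z + o1).
  { indS (PEx (fun z => PImp (PLt (pp 1) (pp 0)) (PEq (pp 0) (pS (padd (pp 1) (pv z)))))) (scons x ee).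
    - exists o0. intro H. exfalso. apply (lt0 x); auto.
    - intros y [z Hz]. destruct (classic (x < y)) as [Hl|Hl].
      + exists (z + o1). intros _. rewrite (Hz Hl). ring.
      + exists o0. intro H. apply ltS in H. destruct H as [H|H]; [tauto|]. subst. ring. }
  intros y Hy. destruct (H y) as [z Hz]. eauto.
Qed.
Lemma ltE2 : forall x z, x < x + z + o1.
Proof.
  intro x. indD (PLt (pp 1) (pS (padd (pp 1) (pp 0)))) (scons x ee).
  - rewrite (ax_add0 M HM). apply ltS. auto.
  - intros z H. rewrite (ax_addS M HM). apply ltS. auto.
Qed.
Lemma ltE : forall x y, x < y <-> exists z, y = x + z + o1.
Proof. split; [apply ltE1|]. intros [z ->]. apply ltE2. Qed.

Lemma lt_irrefl : forall x, ~ x < x.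
Proof.
  intros x H. apply ltE1 in H. destruct H as [z H].
  apply (succ_ne0 z). apply (cancel_l _ _ x). rewrite (ax_add0 M HM). transitivity (x + z + o1). ring. symmetry; auto.
Qed.
Lemma lt_trans : forall x y z, x < y -> y < z -> x < z.
Proof.
  intros x y z H1 H2. apply ltE in H1; apply ltE in H2. destruct H1 as [a ->]. destruct H2 as [b ->].
  apply ltE. exists (a + b + o1). ring.
Qed.
Lemma lt_succ : forall x, x < x + o1.
Proof. intro. apply ltS. auto. Qed.
Lemma lt_0_S : forall x, o0 < x + o1.
Proof. intro. apply ltE. exists x. ring. Qed.
Lemma lt_add : forall x k, x < x + k + o1.
Proof. intros. apply ltE. exists k. ring. Qed.
Lemma le_0 : forall x, le o0 x.
Proof. intro x. destruct (zs x) as [->|[p ->]]; [right; auto|left; apply lt_0_S]. Qed.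
Lemma le_add : forall x k, le x (x + k).
Proof. intros x k. destruct (zs k) as [->|[p ->]]. right. ring. left. apply ltE. exists p. ring. Qed.
Lemma leE : forall x y, le x y <-> exists z, y = x + z.
Proof.
  intros x y; split.
  - intros [H| ->]. apply ltE in H. destruct H as [z ->]. exists (z + o1). ring. exists o0. ring.
  - intros [z ->]. apply le_add.
Qed.
Lemma lt_le_S : forall x y, x < y <-> le (x + o1) y.
Proof.
  intros x y. rewrite ltE, leE. split; intros [z ->]; exists z; ring.
Qed.
Lemma ltS_le : forall x y, x < y + o1 <-> le x y.
Proof. intros. rewrite ltS. unfold Defs.le. tauto. Qed.
Lemma trich : forall x y, x < y \/ x = y \/ y < x.
Proof.
  intro x. indD (POr (PLt (pp 1) (pp 0)) (POr (PEq (pp 1) (pp 0)) (PLt (pp 0) (pp 1)))) (scons x ee).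
  - destruct (le_0 x) as [H|H]; auto.
  - intros y [H|[H|H]].
    + left. eapply lt_trans; eauto. apply lt_succ.
    + left. subst. apply lt_succ.
    + apply lt_le_S in H. destruct H as [H|H]; auto.
Qed.
Lemma lt_asym : forall x y, x < y -> ~ y < x.
Proof. intros x y H1 H2. apply (lt_irrefl x). eapply lt_trans; eauto. Qed.
Lemma le_trans : forall x y z, le x y -> le y z -> le x z.
Proof. intros x y z H1 H2. apply leE in H1; apply leE in H2; apply leE. destruct H1 as [a ->]; destruct H2 as [b ->]. exists (a + b); ring. Qed.
Lemma le_lt_trans : forall x y z, le x y -> y < z -> x < z.
Proof. intros x y z [H| ->] H2; auto. eapply lt_trans; eauto. Qed.
Lemma lt_le_trans : forall x y z, x < y -> le y z -> x < z.
Proof. intros x y z H [H2| ->]; auto. eapply lt_trans; eauto. Qed.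
Lemma not_lt : forall x y, ~ x < y -> le y x.
Proof. intros x y H. destruct (trich x y) as [H1|[H1|H1]]; [tauto|right; auto|left; auto]. Qed.
Lemma lt_not_le : forall x y, x < y -> ~ le y x.
Proof. intros x y H [H1| ->]. apply (lt_asym x y); auto. apply (lt_irrefl x); auto. Qed.
Lemma le_not_lt : forall x y, le x y -> ~ y < x.
Proof. intros x y H H1. apply (lt_not_le y x); auto. Qed.
Lemma le_refl : forall x, le x x.
Proof. right; auto. Qed.
Lemma lt_le : forall x y, x < y -> le x y.
Proof. left; auto. Qed.
Lemma le_antisym : forall x y, le x y -> le y x -> x = y.
Proof. intros x y [H|H] H2; auto. exfalso. apply (le_not_lt y x); auto. Qed.
Lemma add_lt_mono : forall x y k, x < y -> x + k < y + k.
Proof. intros x y k H. apply ltE in H; apply ltE. destruct H as [z ->]. exists z. ring. Qed.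
Lemma add_le_mono : forall x y k, le x y -> le (x + k) (y + k).
Proof. intros x y k H. apply leE in H; apply leE. destruct H as [z ->]. exists z. ring. Qed.
Lemma add_le_mono2 : forall x y a b, le x y -> le a b -> le (x + a) (y + b).
Proof. intros x y a b H H2. apply leE in H; apply leE in H2; apply leE. destruct H as [z ->]. destruct H2 as [w ->]. exists (z + w). ring. Qed.
Lemma mul_le_mono : forall x y k, le x y -> le (x * k) (y * k).
Proof. intros x y k H. apply leE in H; apply leE. destruct H as [z ->]. exists (z * k). ring. Qed.
Lemma mul_le_mono2 : forall x y a b, le x y -> le a b -> le (x * a) (y * b).
Proof. intros x y a b H H2. apply leE in H; apply leE in H2; apply leE. destruct H as [z ->]. destruct H2 as [w ->]. exists (x * w + z * a + z * w). ring. Qed.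
Lemma nz_S : forall k, k <> o0 -> exists p, k = p + o1.
Proof. intros k H. destruct (zs k) as [->|[p ->]]; eauto. tauto. Qed.
Lemma mul_lt_mono : forall x y k, x < y -> k <> o0 -> x * k < y * k.
Proof.
  intros x y k H Hk. apply nz_S in Hk. destruct Hk as [p ->]. apply ltE in H; apply ltE.
  destruct H as [z ->]. exists (z * p + z + p). ring.
Qed.
Lemma le_mul_pos : forall x k, k <> o0 -> le x (x * k).
Proof. intros x k Hk. apply nz_S in Hk. destruct Hk as [p ->]. apply leE. exists (x * p). ring. Qed.
Lemma not_lt_add : forall x w, ~ x + w < x.
Proof. intros x w H. apply (lt_not_le _ _ H). apply le_add. Qed.
Lemma lt_ne : forall x y, x < y -> x <> y.
Proof. intros x y H ->. apply (lt_irrefl y); auto. Qed.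
Lemma ne0_lt : forall x, x <> o0 -> o0 < x.
Proof. intros x H. apply nz_S in H. destruct H as [p ->]. apply lt_0_S. Qed.
End Arith.

End P2.
Import P2.

Module P3.

Set Default Proof Using "All".
Section Basics.
Variable M : L2str.
Hypothesis HM : RCA0 M.
Variable S0 : Set2 M.
Local Notation N := (Num M).
Local Notation "x + y" := (add M x y).
Local Notation "x * y" := (mul M x y).
Local Notation "x < y" := (lt M x y).
Local Notation o0 := (zero M).
Local Notation o1 := (one M).
Local Notation le := (le M).
Add Ring Mring : (Msrt M HM S0).
Local Notation EE := (EE M S0).
Local Notation ee := (ee M).

Ltac indD p e := 
  lazymatch goal with |- forall n, @?P n => 
   apply (ind_D0 M HM (p O) e EE P); [d0 | intros; reflexivity | | ] end.
Ltac indS p e :=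
  lazymatch goal with |- forall n, @?P n =>
   apply (ind_S1 M HM (p O) e EE P); [apply Sigma_fex; d0 | intros; reflexivity | | ] end.

Lemma lnp : forall q, Delta0 q -> forall e E,
  (exists x, sat M (scons x e) E q) ->
  exists x, sat M (scons x e) E q /\ forall y, y < x -> ~ sat M (scons y e) E q.
Proof.
  intros q Hq e E [x Hx]. apply NNPP; intro Hn.
  assert (K : forall k, forall y, y < k -> ~ sat M (scons y e) E q).
  { apply (ind_D0 M HM (fallb (tvar 0) (fnot (fren (up S) q))) e E (fun k => forall y, y < k -> ~ sat M (scons y e) E q)).
    - repeat constructor. apply D0_ren; auto.
    - intro k. simpl. split; intros H y Hy; specialize (H y Hy);
      rewrite (sat_ren_ext M q (up S) (scons y (scons k e)) (scons y e)) in *; auto;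
      intros [|j]; reflexivity.
    - intros y Hy. exfalso. apply (lt0 M HM S0 y); auto.
    - intros k H y Hy. apply (ltS M HM S0) in Hy. destruct Hy as [Hy| ->]; auto.
      intro Hk. apply Hn. eexists. split; eauto. }
  apply (K (x + o1) x); auto. apply (lt_succ M HM S0).
Qed.

Lemma div_ex : forall m a, m <> o0 -> exists q r, r < m /\ a = q * m + r.
Proof.
  intros m a Hm. revert a.
  assert (H : forall a, exists q, exists r, r < m /\ a = q * m + r).
  { indS (PEx (fun q => PExb (pp 1) (fun r => PEq (pp 0) (padd (pmul (pv q) (pp 1)) (pv r))))) (scons m ee).
    - exists o0, o0. split. apply (ne0_lt M HM S0); auto. ring.
    - intros a [q [r [Hr ->]]]. apply (lt_le_S M HM S0) in Hr. destruct Hr as [Hr|Hr].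
      + exists q, (r + o1). split; auto. ring.
      + exists (q + o1), o0. split. apply (ne0_lt M HM S0); auto. rewrite <- Hr. ring. }
  exact H.
Qed.

Lemma div_unique : forall m q r q' r', r < m -> r' < m -> q * m + r = q' * m + r' -> q = q' /\ r = r'.
Proof.
  assert (A : forall m q r q' r', r < m -> r' < m -> q * m + r = q' * m + r' -> q < q' -> False).
  { intros m q r q' r' Hr Hr' E Hq. apply (ltE M HM S0) in Hq. destruct Hq as [z ->].
    assert (r = m + (z * m + r')).
    { apply (cancel_l M HM S0 _ _ (q * m)). rewrite E. ring. }
    subst r. apply (not_lt_add M HM S0 m (z * m + r')); auto. }
  intros m q r q' r' Hr Hr' E.
  destruct (trich M HM S0 q q') as [H|[H|H]].
  - exfalso; eauto.
  - subst. split; auto. eapply (cancel_l M HM S0); eauto.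
  - exfalso. eapply (A m q' r' q r); eauto.
Qed.

Lemma rem_ex : forall a m, m <> o0 -> exists v, Rem M a m v.
Proof. intros a m Hm. destruct (div_ex m a Hm) as [q [r [Hr E]]]. exists r. split; eauto. Qed.
Lemma rem_unique : forall a m v v', Rem M a m v -> Rem M a m v' -> v = v'.
Proof. intros a m v v' [H1 [q E1]] [H2 [q' E2]]. rewrite E1 in E2. eapply div_unique; eauto. Qed.
Lemma rem_le : forall a m v, Rem M a m v -> le v a.
Proof. intros a m v [_ [q ->]]. apply (leE M HM S0). exists (q * m). ring. Qed.
Lemma rem_add : forall a m v k, Rem M a m v -> Rem M (a + k * m) m v.
Proof. intros a m v k [H [q ->]]. split; auto. exists (q + k). ring. Qed.
Lemma rem_add' : forall a m v k, Rem M a m v -> Rem M (k * m + a) m v.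
Proof. intros. rewrite (add_comm M HM S0). apply rem_add; auto. Qed.
Lemma rem_sub : forall a m v k, Rem M (a + k * m) m v -> Rem M a m v.
Proof.
  intros a m v k H. assert (Hm : m <> o0). { intro E; subst. destruct H. eapply (lt0 M HM S0); eauto. }
  destruct (rem_ex a m Hm) as [v' H']. rewrite (rem_unique _ _ _ _ H (rem_add _ _ _ k H')). auto.
Qed.
Lemma rem_small : forall v m, v < m -> Rem M v m v.
Proof. intros v m H. split; auto. exists o0. ring. Qed.
Lemma rem_q_le : forall a m v q, m <> o0 -> a = q * m + v -> le q a.
Proof.
  intros a m v q Hm ->. apply (le_trans M HM S0 _ (q * m)). apply (le_mul_pos M HM S0); auto.
  apply (le_add M HM S0).
Qed.

Lemma pair_lt : forall i j i' j', i + j < i' + j' -> pair M i j < pair M i' j'.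
Proof.
  intros i j i' j' H. apply (ltE M HM S0) in H. destruct H as [z E]. unfold pair. rewrite E.
  apply (ltE M HM S0). exists (i + (o1 + o1) * j + (o1 + o1) * (i + j) * z + z * z + (o1 + o1) * z + i'). ring.
Qed.
Lemma pair_inj : forall i j i' j', pair M i j = pair M i' j' -> i = i' /\ j = j'.
Proof.
  intros i j i' j' E. destruct (trich M HM S0 (i + j) (i' + j')) as [H|[H|H]].
  - exfalso. apply pair_lt in H. rewrite E in H. eapply (lt_irrefl M HM S0); eauto.
  - unfold pair in E. rewrite H in E. apply (cancel_l M HM S0) in E. subst i'. split; auto.
    apply (cancel_l M HM S0 _ _ i); auto.
  - exfalso. apply pair_lt in H. rewrite E in H. eapply (lt_irrefl M HM S0); eauto.
Qed.
Lemma sq_ge : forall x, le x (x * x).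
Proof.
  intro x. destruct (zs M HM S0 x) as [->|[p ->]]. right; ring. apply (le_mul_pos M HM S0). apply (succ_ne0 M HM S0).
Qed.
Lemma pair_ge1 : forall i j, le i (pair M i j).
Proof. intros. unfold pair. apply (leE M HM S0). exists ((i + j) * (i + j)). ring. Qed.
Lemma pair_ge2 : forall i j, le j (pair M i j).
Proof.
  intros. unfold pair. apply (le_trans M HM S0 _ (i + j)). apply (leE M HM S0). exists i; ring.
  apply (le_trans M HM S0 _ ((i + j) * (i + j))). apply sq_ge. apply (le_add M HM S0).
Qed.
Lemma pair_mono : forall i j i' j', le i i' -> le j j' -> le (pair M i j) (pair M i' j').
Proof.
  intros. unfold pair. assert (le (i + j) (i' + j')) by (apply (add_le_mono2 M HM S0); auto).
  apply (add_le_mono2 M HM S0); auto. apply (mul_le_mono2 M HM S0); auto.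
Qed.

Definition mm (d i : N) : N := o1 + (i + o1) * d.
Lemma mm_ne0 : forall d i, mm d i <> o0.
Proof. intros d i E. unfold mm in E. rewrite (add_comm M HM S0) in E. apply (succ_ne0 M HM S0) in E; auto. Qed.

Lemma entry_code : forall c l a d i v, c = pair M l (pair M a d) ->
  (Entry M c i v <-> i < l /\ Rem M a (mm d i) v).
Proof.
  intros c l a d i v ->. split.
  - intros [l' [a' [d' [E [H1 H2]]]]]. apply pair_inj in E. destruct E as [<- E]. apply pair_inj in E.
    destruct E as [<- <-]. auto.
  - intros [H1 H2]. exists l, a, d. auto.
Qed.
Lemma len_unique : forall c l l', Len M c l -> Len M c l' -> l = l'.
Proof. intros c l l' [a [d ->]] [a' [d' E]]. apply pair_inj in E. tauto. Qed.
Lemma len_le : forall c l, Len M c l -> le l c.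
Proof. intros c l [a [d ->]]. apply pair_ge1. Qed.
Lemma entry_fun : forall c i v v', Entry M c i v -> Entry M c i v' -> v = v'.
Proof.
  intros c i v v' [l [a [d [E [H1 H2]]]]] H'. rewrite (entry_code c l a d i v' E) in H'.
  destruct H'. eapply rem_unique; eauto.
Qed.
Lemma entry_ex : forall c l i, Len M c l -> i < l -> exists v, Entry M c i v.
Proof.
  intros c l i [a [d E]] Hi. destruct (rem_ex a (mm d i) (mm_ne0 d i)) as [v Hv].
  exists v. rewrite (entry_code c l a d i v E). auto.
Qed.
Lemma entry_lt : forall c l i v, Len M c l -> Entry M c i v -> i < l.
Proof.
  intros c l i v [a [d E]] H. rewrite (entry_code c l a d i v E) in H. tauto.
Qed.
Lemma entry_le : forall c i v, Entry M c i v -> le v c.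
Proof.
  intros c i v [l [a [d [E [H1 H2]]]]]. subst c. apply (le_trans M HM S0 _ a). eapply rem_le; eauto.
  apply (le_trans M HM S0 _ (pair M a d)). apply pair_ge1. apply pair_ge2.
Qed.
End Basics.

End P3.
Import P3.

Module P4.

Set Default Proof Using "All".
Section Code.
Variable M : L2str.
Hypothesis HM : RCA0 M.
Variable S0 : Set2 M.
Local Notation N := (Num M).
Local Notation "x + y" := (add M x y).
Local Notation "x * y" := (mul M x y).
Local Notation "x < y" := (lt M x y).
Local Notation o0 := (zero M).
Local Notation o1 := (one M).
Local Notation le := (le M).
Add Ring Mring : (Msrt M HM S0).
Local Notation EE := (EE M S0).

Local Notation mm := (mm M).

Ltac indS p e :=
  lazymatch goal with |- forall n, @?P n =>
   apply (ind_S1 M HM (p O) e EE P); [apply Sigma_fex; d02 | intros; dsl2; simpl; walk | | ] end.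

Definition RemB (a m v : N) : Prop := v < m /\ exists q, q < a + o1 /\ a = q * m + v.
Lemma RemB_iff : forall a m v, m <> o0 -> (RemB a m v <-> Rem M a m v).
Proof.
  intros a m v Hm. split.
  - intros [H [q [_ E]]]. split; eauto.
  - intros [H [q E]]. split; auto. exists q. split; auto. apply (ltS_le M HM S0). eapply (rem_q_le M HM S0); eauto.
Qed.

Lemma one_ne0 : o1 <> o0.
Proof. intro E. apply (succ_ne0 M HM S0 o0). rewrite (add0l M HM S0). auto. Qed.
Lemma mul_ne0 : forall a b, a <> o0 -> b <> o0 -> a * b <> o0.
Proof.
  intros a b Ha Hb. apply (nz_S M HM S0) in Ha; apply (nz_S M HM S0) in Hb.
  destruct Ha as [p ->]; destruct Hb as [q ->]. intro E. apply (succ_ne0 M HM S0 (p * q + p + q)).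
  rewrite <- E. ring.
Qed.
Lemma le_mul_l : forall k t, k <> o0 -> le t (k * t).
Proof. intros k t H. rewrite (mul_comm M HM S0). apply (le_mul_pos M HM S0); auto. Qed.
Lemma lt_1_mm : forall D i, D <> o0 -> o1 < mm D i.
Proof.
  intros D i HD. unfold mm. apply (nz_S M HM S0) in HD. destruct HD as [p ->].
  apply (ltE M HM S0). exists ((i + o1) * p + i). ring.
Qed.
Lemma D_lt_mm : forall D i, D < mm D i.
Proof. intros. unfold mm. apply (ltE M HM S0). exists (i * D). ring. Qed.

Lemma exD : forall n, exists D, ~ D = o0 /\ forall k, k < n + o1 -> o0 < k -> exists t, t < D + o1 /\ D = k * t.
Proof.
  indS (PEx (fun D => PAnd (PNot (PEq (pv D) pz)) (PAllb (pS (pp 0)) (fun k => PImp (PLt pz (pv k)) (PExb (pS (pv D)) (fun t => PEq (pv D) (pmul (pv k) (pv t)))))))) (ee M).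
  - exists o1. split. apply one_ne0. intros k Hk Hk0. exfalso. apply (ltS_le M HM S0) in Hk.
    apply (le_not_lt M HM S0 _ _ Hk). rewrite (add0l M HM S0) in Hk0 || idtac. auto.
  - intros n [D [HD H]]. exists (D * (n + o1)). split. apply mul_ne0; auto. apply (succ_ne0 M HM S0).
    intros k Hk Hk0. apply (ltS M HM S0) in Hk. destruct Hk as [Hk| ->].
    + destruct (H k Hk Hk0) as [t [_ Et]]. exists (t * (n + o1)). split.
      * apply (ltS_le M HM S0). apply (mul_le_mono M HM S0). rewrite Et. apply le_mul_l. intro E; subst k. eapply (lt_irrefl M HM S0); eauto.
      * rewrite Et. ring.
    + exists D. split. apply (ltS_le M HM S0). rewrite (mul_comm M HM S0). apply le_mul_l. apply (succ_ne0 M HM S0).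
      ring.
Qed.

Lemma exQ : forall D n, exists Q, ~ Q = o0 /\ forall i, i < n -> exists t, t < Q + o1 /\ Q = mm D i * t.
Proof.
  intro D.
  indS (PEx (fun Q => PAnd (PNot (PEq (pv Q) pz)) (PAllb (pp 0) (fun i => PExb (pS (pv Q)) (fun t => PEq (pv Q) (pmul (mmP (pp 1) (pv i)) (pv t))))))) (scons D (ee M)).
  - exists o1. split. apply one_ne0. intros i Hi. exfalso. eapply (lt0 M HM S0); eauto.
  - intros n [Q [HQ H]]. exists (Q * mm D n). split. apply mul_ne0; [exact HQ | apply (mm_ne0 M HM S0)].
    intros i Hi. apply (ltS M HM S0) in Hi. destruct Hi as [Hi| ->].
    + destruct (H i Hi) as [t [_ Et]]. exists (t * mm D n). split.
      * apply (ltS_le M HM S0). rewrite Et. rewrite <- (mul_assoc M HM S0). apply le_mul_l. apply (mm_ne0 M HM S0).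
      * rewrite Et. ring.
    + exists Q. split. apply (ltS_le M HM S0). apply (le_mul_pos M HM S0). apply (mm_ne0 M HM S0). ring.
Qed.

Lemma inv_mm' : forall i k0 e', exists u,
  Rem M (mm ((k0 + o1) * (e' + o1)) i * u) (mm ((k0 + o1) * (e' + o1)) (i + k0 + o1)) o1.
Proof.
  intros i k0 e'.
  set (e := e' + o1). set (D := (k0 + o1) * e). set (J := i + k0 + o1 + o1).
  set (y := e * J * (i + o1) + o1). set (x := e * J * J).
  exists (x * (J * D)). split.
  - apply lt_1_mm. unfold D, e. apply mul_ne0; apply (succ_ne0 M HM S0).
  - exists (y * J * (k0 + o1) * e' + y * J * k0 + y * (i + k0 + o1) + e * J * (i + o1)).
    unfold mm, x, y, J, D, e. ring.
Qed.

Lemma inv_mm : forall D i j, D <> o0 -> i < j -> (forall k, o0 < k -> le k j -> exists t, D = k * t) ->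
  exists u, Rem M (mm D i * u) (mm D j) o1.
Proof.
  intros D i j HD Hij Hdiv. apply (ltE M HM S0) in Hij. destruct Hij as [k0 ->].
  destruct (Hdiv (k0 + o1)) as [e Ee]. apply (lt_0_S M HM S0). apply (leE M HM S0). exists i. ring.
  subst D. assert (e <> o0). { intro E; subst. apply HD. ring. }
  apply (nz_S M HM S0) in H. destruct H as [e' ->]. apply inv_mm'.
Qed.

Lemma rem_mul1 : forall P Q u u' m, Rem M (P * u) m o1 -> Rem M (Q * u') m o1 -> Rem M ((P * Q) * (u * u')) m o1.
Proof.
  intros P Q u u' m [H1 [a Ea]] [_ [b Eb]]. split; auto. exists (a * b * m + a + b).
  transitivity ((P * u) * (Q * u')). ring. rewrite Ea, Eb. ring.
Qed.
Lemma rem_reduce : forall P u m, Rem M (P * u) m o1 -> exists u', u' < m /\ Rem M (P * u') m o1.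
Proof.
  intros P u m H. assert (Hm : m <> o0). { intro E; subst. destruct H. eapply (lt0 M HM S0); eauto. }
  destruct (div_ex M HM S0 m u Hm) as [q [r [Hr ->]]]. exists r. split; auto.
  apply (rem_sub M HM S0 _ _ _ (P * q)). replace (P * r + P * q * m) with (P * (q * m + r)) by ring. auto.
Qed.

Definition PG (g : form) (li lv : nat) : pf := fun d =>
  fren (fun x => match x with 0 => d - lv - 1 | 1 => d - li - 1 | S (S j) => Nat.add d (S (S (S (S j)))) end) g.

Section CRT.
Variables (n D V : N) (g : form) (eG : nat -> N) (E : nat -> Set2 M).
Hypothesis Hg : Delta0 g.
Let G i v := sat M (scons v (scons i eG)) E g.
Hypothesis HD : D <> o0.
Hypothesis Hdiv : forall k, o0 < k -> le k n -> exists t, D = k * t.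
Hypothesis HV : le V D.
Hypothesis Htot : forall i, i < n -> exists v, v < V /\ G i v.

Definition CRTf : pf :=
 PEx (fun w => PExb (pS (pv w)) (fun a => PExb (pS (pv w)) (fun P =>
 PAnd (PNot (PEq (pv P) pz))
 (PAnd (PAllb (pp 0) (fun i => PImp (PLt (pv i) (pp 1)) (PExb (pp 3) (fun v => PAnd (PG g i v) (RemP (pv a) (mmP (pp 2) (pv i)) (pv v))))))
 (PAnd (PAllb (pp 0) (fun i => PImp (PLt (pv i) (pp 1)) (PExb (pS (pv P)) (fun t => PEq (pv P) (pmul (mmP (pp 2) (pv i)) (pv t))))))
       (PAllb (pp 1) (fun j => PImp (PLe (pp 0) (pv j)) (PExb (mmP (pp 2) (pv j)) (fun u => RemP (pmul (pv P) (pv u)) (mmP (pp 2) (pv j)) po))))))))).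

Lemma crt_ind : forall k, exists w, exists a, a < w + o1 /\ exists P, P < w + o1 /\ (~ P = o0 /\ ((forall i, i < k -> i < n -> exists v, v < V /\ (G i v /\ RemB a (mm D i) v)) /\ ((forall i, i < k -> i < n -> exists t, t < P + o1 /\ P = mm D i * t) /\ (forall j, j < n -> le k j -> exists u, u < mm D j /\ RemB (P * u) (mm D j) o1)))).
Proof.
  lazymatch goal with |- forall x, @?Q x =>
   apply (ind_S1 M HM (CRTf O) (scons n (scons D (scons V eG))) E Q) end.
  - apply Sigma_fex. unfold CRTf, PG. dsl2. simpl. repeat (constructor || apply D0_ren || assumption).
  - intros; unfold CRTf, PG, G; dsl2; simpl; walk.
  - exists o1, o0. split. apply (lt_0_S M HM S0). exists o1. split. apply (lt_succ M HM S0).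
    split. apply one_ne0. split. intros i Hi. exfalso. eapply (lt0 M HM S0); eauto.
    split. intros i Hi. exfalso. eapply (lt0 M HM S0); eauto.
    intros j Hj _. exists o1. split. apply lt_1_mm; auto. split. apply lt_1_mm; auto.
    exists o0. split. apply (lt_0_S M HM S0). ring.
  - intros k [w [a [Ha [P [HP [HP0 [H1 [H2 H3]]]]]]]].
    destruct (classic (k < n)) as [Hkn|Hkn].
    + destruct (H3 k Hkn (le_refl M HM S0 k)) as [u0 [Hu0 Ru0]].
      apply RemB_iff in Ru0; [|apply (mm_ne0 M HM S0)].
      destruct Ru0 as [_ [q0 E0]].
      destruct (Htot k Hkn) as [v [HvV Gv]].
      set (X := v + (k + o1) * D * a).
      set (a' := a + P * u0 * X). set (P' := P * mm D k).
      assert (HvM : forall i, v < mm D i).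
      { intro i. eapply (lt_le_trans M HM S0); eauto. apply (lt_le M HM S0). eapply (le_lt_trans M HM S0); eauto. apply D_lt_mm. }
      exists (a' + P'), a'. split. apply (ltS_le M HM S0). apply (le_add M HM S0).
      exists P'. split. apply (ltS_le M HM S0). apply (leE M HM S0). exists a'. ring.
      split. apply mul_ne0; auto. apply (mm_ne0 M HM S0).
      split; [|split].
      * intros i Hi Hin. apply (ltS M HM S0) in Hi. destruct Hi as [Hi| ->].
        -- destruct (H1 i Hi Hin) as [vi [HviV [Gi Ri]]]. exists vi. split; auto. split; auto.
           apply RemB_iff; [apply (mm_ne0 M HM S0)|]. apply RemB_iff in Ri; [|apply (mm_ne0 M HM S0)].
           destruct (H2 i Hi Hin) as [t [_ Et]].
           replace a' with (a + (t * u0 * X) * mm D i) by (unfold a'; rewrite Et; ring).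
           apply (rem_add M HM S0); auto.
        -- exists v. split; auto. split; auto. apply RemB_iff; [apply (mm_ne0 M HM S0)|].
           split; auto. exists (a + q0 * X).
           unfold a'. rewrite E0. unfold X, mm. ring.
      * intros i Hi Hin. apply (ltS M HM S0) in Hi. destruct Hi as [Hi| ->].
        -- destruct (H2 i Hi Hin) as [t [_ Et]]. exists (t * mm D k). split.
           ++ apply (ltS_le M HM S0). unfold P'. rewrite Et. rewrite <- (mul_assoc M HM S0). apply le_mul_l. apply (mm_ne0 M HM S0).
           ++ unfold P'. rewrite Et. ring.
        -- exists P. split. apply (ltS_le M HM S0). apply (le_mul_pos M HM S0). apply (mm_ne0 M HM S0). unfold P'; ring.
      * intros j Hj Hkj. assert (Hkj' : k < j) by (apply (lt_le_S M HM S0); auto).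
        destruct (H3 j Hj (lt_le M HM S0 _ _ Hkj')) as [uj [_ Ruj]].
        apply RemB_iff in Ruj; [|apply (mm_ne0 M HM S0)].
        destruct (inv_mm D k j HD Hkj') as [wk Rwk].
        { intros k' Hk' Hk'j. apply Hdiv; auto. apply (lt_le M HM S0). eapply (le_lt_trans M HM S0); eauto. }
        destruct (rem_reduce P' (uj * wk) (mm D j)) as [u' [Hu' Ru']].
        { unfold P'. apply rem_mul1; auto. }
        exists u'. split; auto. apply RemB_iff; auto. apply (mm_ne0 M HM S0).
    + exists w, a. split; auto. exists P. split; auto. split; auto.
      apply (not_lt M HM S0) in Hkn.
      split; [|split].
      * intros i Hi Hin. apply H1; auto. apply (ltS M HM S0) in Hi. destruct Hi as [Hi| ->]; auto.
        exfalso. apply (le_not_lt M HM S0 _ _ Hkn); auto.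
      * intros i Hi Hin. apply H2; auto. apply (ltS M HM S0) in Hi. destruct Hi as [Hi| ->]; auto.
        exfalso. apply (le_not_lt M HM S0 _ _ Hkn); auto.
      * intros j Hj Hkj. apply H3; auto. apply (le_trans M HM S0 _ (k + o1)); auto.
        apply (lt_le M HM S0). apply (lt_succ M HM S0).
Qed.

Lemma crt : exists a, forall i, i < n -> exists v, v < V /\ G i v /\ Rem M a (mm D i) v.
Proof.
  destruct (crt_ind n) as [w [a [_ [P [_ [_ [H1 _]]]]]]].
  exists a. intros i Hi. destruct (H1 i Hi Hi) as [v [Hv [Gv Rv]]]. exists v. split; auto. split; auto.
  apply RemB_iff; auto. apply (mm_ne0 M HM S0).
Qed.
End CRT.


Lemma code_lemma : forall NN V, exists B, forall n, le n NN -> forall g, Delta0 g -> forall eG E,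
  (forall i, i < n -> exists v, v < V /\ sat M (scons v (scons i eG)) E g) ->
  (forall i v v', i < n -> sat M (scons v (scons i eG)) E g -> sat M (scons v' (scons i eG)) E g -> v = v') ->
  exists c, le c B /\ Len M c n /\ forall i w, i < n -> (Entry M c i w <-> sat M (scons w (scons i eG)) E g).
Proof.
  intros NN V. destruct (exD (NN + V)) as [D [HD HdivD]]. destruct (exQ D NN) as [Q [HQ HdivQ]].
  exists (pair M NN (pair M Q D)). intros n Hn g Hg eG E Htot Hfun.
  assert (Hdiv : forall k, o0 < k -> le k n -> exists t, D = k * t).
  { intros k Hk Hkn. destruct (HdivD k) as [t [_ Et]]; eauto. apply (ltS_le M HM S0).
    apply (le_trans M HM S0 _ n); auto. apply (le_trans M HM S0 _ NN); auto. apply (le_add M HM S0). }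
  assert (HV : le V D).
  { destruct (zs M HM S0 V) as [->|[p Ep]]. apply (le_0 M HM S0).
    destruct (HdivD V) as [t [_ Et]].
    - apply (ltS_le M HM S0). apply (leE M HM S0). exists NN. ring.
    - rewrite Ep. apply (lt_0_S M HM S0).
    - rewrite Et. apply (le_mul_pos M HM S0). intro E0. apply HD. rewrite Et, E0. ring. }
  destruct (crt n D V g eG E Hg HD Hdiv HV Htot) as [a Ha].
  destruct (div_ex M HM S0 Q a HQ) as [q [r [Hr Ea]]].
  exists (pair M n (pair M r D)). split; [|split].
  - apply (pair_mono M HM S0); auto. apply (pair_mono M HM S0). apply (lt_le M HM S0); auto. apply (le_refl M HM S0).
  - exists r, D. auto.
  - intros i w Hi. rewrite (entry_code M HM S0 _ n r D i w eq_refl).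
    destruct (Ha i Hi) as [v [_ [Gv Rv]]].
    assert (Rv' : Rem M r (mm D i) v).
    { destruct (HdivQ i) as [t [_ Et]]. eapply (lt_le_trans M HM S0); eauto.
      apply (rem_sub M HM S0 _ _ _ (q * t)). replace (r + q * t * mm D i) with a; auto.
      rewrite Ea, Et. ring. }
    split.
    + intros [_ Rw]. rewrite (rem_unique M HM S0 _ _ _ _ Rw Rv'). auto.
    + intro Gw. split; auto. rewrite (Hfun i w v Hi Gw Gv). auto.
Qed.
End Code.

End P4.
Import P4.

Module P5.

Set Default Proof Using "All".
Section Bnd.
Variable M : L2str.
Hypothesis HM : RCA0 M.
Variable F : Set2 M.
Local Notation S0 := F.
Local Notation N := (Num M).
Local Notation "x + y" := (add M x y).
Local Notation "x * y" := (mul M x y).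
Local Notation "x < y" := (lt M x y).
Local Notation o0 := (zero M).
Local Notation o1 := (one M).
Local Notation le := (le M).
Add Ring Mring : (Msrt M HM S0).
Local Notation mm := (mm M).
Local Notation RemB := (RemB M).

Definition EntryB (c i v : N) : Prop := exists l, l < c + o1 /\ exists a, a < c + o1 /\ exists d, d < c + o1 /\
  (c = pair M l (pair M a d) /\ (i < l /\ RemB a (mm d i) v)).
Definition LenB (c l : N) : Prop := exists a, a < c + o1 /\ exists d, d < c + o1 /\ c = pair M l (pair M a d).

Lemma EntryB_iff : forall c i v, EntryB c i v <-> Entry M c i v.
Proof.
  intros c i v. split.
  - intros [l [_ [a [_ [d [_ [E [H1 H2]]]]]]]]. apply (RemB_iff M HM S0) in H2; [|apply (mm_ne0 M HM S0)].
    exists l, a, d. auto.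
  - intros [l [a [d [E [H1 H2]]]]]. apply (RemB_iff M HM S0) in H2; [|apply (mm_ne0 M HM S0)].
    subst c. exists l. split. apply (ltS_le M HM S0). apply (pair_ge1 M HM S0).
    exists a. split. apply (ltS_le M HM S0). eapply (le_trans M HM S0). apply (pair_ge1 M HM S0). apply (pair_ge2 M HM S0).
    exists d. split. apply (ltS_le M HM S0). eapply (le_trans M HM S0). apply (pair_ge2 M HM S0). apply (pair_ge2 M HM S0).
    auto.
Qed.
Lemma LenB_iff : forall c l, LenB c l <-> Len M c l.
Proof.
  intros c l. split.
  - intros [a [_ [d [_ E]]]]. exists a, d. auto.
  - intros [a [d E]]. subst c.
    exists a. split. apply (ltS_le M HM S0). eapply (le_trans M HM S0). apply (pair_ge1 M HM S0). apply (pair_ge2 M HM S0).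
    exists d. split. apply (ltS_le M HM S0). eapply (le_trans M HM S0). apply (pair_ge2 M HM S0). apply (pair_ge2 M HM S0).
    auto.
Qed.

Hypothesis HF : InjFun M F.
Definition EF : nat -> Set2 M := fun _ => F.

Lemma F_ne0 : forall j i, mem M (pair M j i) F -> j <> o0.
Proof.
  intros j i H. destruct HF as [H1 _]. destruct (H1 _ H) as [j' [i' [Hj E]]].
  apply (pair_inj M HM S0) in E. destruct E; subst; auto.
Qed.
Lemma F_inj : forall j j' i, mem M (pair M j i) F -> mem M (pair M j' i) F -> j = j'.
Proof. intros. destruct HF as [_ [_ [_ H4]]]. eauto. Qed.

Definition SigStep (c1 c2 p : nat) : pf := PExb (pS (pv c1)) (fun v => PExb (pS (pv c2)) (fun x => PExb (pS (pv c2)) (fun y =>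
        PAnd (EntryP (pv c1) (pv p) (pv v)) (PAnd (EntryP (pv c2) (pv p) (pv x)) (PAnd (EntryP (pv c2) (pS (pv p)) (pv y))
        (POr (PAnd (PEq (pv v) pz) (PEq (pv y) (pv x))) (PAnd (PNot (PEq (pv v) pz)) (PAnd (PEq (pv y) (pS (pv x))) (PMem (ppair (pv v) (pv p)) 0))))))))).
Definition SigF : pf :=
 PEx (fun w => PExb (pS (pv w)) (fun c1 => PExb (pS (pv w)) (fun c2 =>
  PAnd (LenP (pv c1) (pp 1))
  (PAnd (LenP (pv c2) (pS (pp 1)))
  (PAnd (EntryP (pv c2) pz pz)
  (PAnd (PAllb (pp 1) (fun p => SigStep c1 c2 p))
  (PExb (pS (pv c2)) (fun z => PAnd (EntryP (pv c2) (pp 1) (pv z)) (PLe (pp 0) (pv z)))))))))).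

Definition SigM (L k : N) : Prop :=
  exists w, exists c1, c1 < w + o1 /\ exists c2, c2 < w + o1 /\
  (LenB c1 L /\ (LenB c2 (L + o1) /\ (EntryB c2 o0 o0 /\
  ((forall p, p < L -> exists v, v < c1 + o1 /\ exists x, x < c2 + o1 /\ exists y, y < c2 + o1 /\
     (EntryB c1 p v /\ (EntryB c2 p x /\ (EntryB c2 (p + o1) y /\
     ((v = o0 /\ y = x) \/ (~ v = o0 /\ (y = x + o1 /\ mem M (pair M v p) F))))))) /\
   exists z, z < c2 + o1 /\ (EntryB c2 L z /\ le k z))))).

Definition Phi (L c1 c2 k : N) : Prop :=
  Len M c1 L /\ Len M c2 (L + o1) /\ Entry M c2 o0 o0 /\
  (forall p, p < L -> exists v x y, Entry M c1 p v /\ Entry M c2 p x /\ Entry M c2 (p + o1) y /\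
     ((v = o0 /\ y = x) \/ (v <> o0 /\ y = x + o1 /\ mem M (pair M v p) F))) /\
  exists z, Entry M c2 L z /\ le k z.

Lemma lt_S_of_le : forall x y, le x y -> x < y + o1.
Proof. intros. apply (ltS_le M HM S0); auto. Qed.

Lemma SigM_iff : forall L k, SigM L k <-> exists c1 c2, Phi L c1 c2 k.
Proof.
  intros L k. split.
  - intros [w [c1 [_ [c2 [_ [H1 [H2 [H3 [H4 [z [_ [H5 H6]]]]]]]]]]]].
    exists c1, c2. rewrite LenB_iff in H1, H2. rewrite EntryB_iff in H3, H5.
    split; auto. split; auto. split; auto. split; [|exists z; auto].
    intros p Hp. destruct (H4 p Hp) as [v [_ [x [_ [y [_ [A1 [A2 [A3 A4]]]]]]]]].
    rewrite EntryB_iff in A1, A2, A3. exists v, x, y. tauto.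
  - intros [c1 [c2 [H1 [H2 [H3 [H4 [z [H5 H6]]]]]]]].
    exists (c1 + c2), c1. split. apply lt_S_of_le. apply (le_add M HM S0).
    exists c2. split. apply lt_S_of_le. apply (leE M HM S0). exists c1. ring.
    rewrite !LenB_iff, !EntryB_iff. split; auto. split; auto. split; auto. split.
    + intros p Hp. destruct (H4 p Hp) as [v [x [y [A1 [A2 [A3 A4]]]]]].
      exists v. split. apply lt_S_of_le. eapply (entry_le M HM S0); eauto.
      exists x. split. apply lt_S_of_le. eapply (entry_le M HM S0); eauto.
      exists y. split. apply lt_S_of_le. eapply (entry_le M HM S0); eauto.
      rewrite !EntryB_iff. tauto.
    + exists z. split. apply lt_S_of_le. eapply (entry_le M HM S0); eauto. rewrite EntryB_iff. auto.
Qed.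

Lemma Sig_ind : forall L, (forall k, SigM L k -> SigM L (k + o1)) -> SigM L o0 -> forall k, SigM L k.
Proof.
  intros L HS H0.
  lazymatch goal with |- forall x, @?Q x =>
   apply (ind_S1 M HM (SigF O) (scons L (ee M)) EF Q) end.
  - apply Sigma_fex. unfold SigF, SigStep. d03.
  - intros; unfold SigF, SigStep, SigM, EntryB, LenB, RemB; dsl3; simpl; walk.
  - auto.
  - auto.
Qed.

Lemma code_fun : forall n V g eG E, Delta0 g ->
  (forall i, i < n -> exists v, v < V /\ sat M (scons v (scons i eG)) E g) ->
  (forall i v v', i < n -> sat M (scons v (scons i eG)) E g -> sat M (scons v' (scons i eG)) E g -> v = v') ->
  exists c, Len M c n /\ forall i w, i < n -> (Entry M c i w <-> sat M (scons w (scons i eG)) E g).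
Proof.
  intros n V g eG E Hg H1 H2. destruct (code_lemma M HM S0 n V) as [B HB].
  destruct (HB n (le_refl M HM S0 n) g Hg eG E H1 H2) as [c [_ [Hc1 Hc2]]]. eauto.
Qed.

Lemma entry_ex' : forall c l i, Len M c l -> i < l -> exists v, Entry M c i v /\ le v c.
Proof. intros c l i H1 H2. destruct (entry_ex M HM S0 c l i H1 H2) as [v Hv]. exists v. split; auto. eapply (entry_le M HM S0); eauto. Qed.

Lemma sig_base : forall L, exists c1 c2, Phi L c1 c2 o0.
Proof.
  intro L.
  assert (Z : forall n, exists c, Len M c n /\ forall i w, i < n -> (Entry M c i w <-> w = o0)).
  { intro n. apply (code_fun n o1 (PEq (pp 0) pz O) (ee M) EF); [d03| |].
    - intros i _. exists o0. split. rewrite <- (add0l M HM S0 o1). apply (lt_0_S M HM S0). reflexivity.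
    - intros i v v' _ H1 H2. simpl in *. congruence. }
  destruct (Z L) as [c1 [H1 H1']]. destruct (Z (L + o1)) as [c2 [H2 H2']].
  exists c1, c2. split; auto. split; auto. split. apply H2'; auto. apply (lt_0_S M HM S0).
  split.
  - intros p Hp. exists o0, o0, o0.
    assert (Hp1 : p < L + o1) by (apply (lt_trans M HM S0 _ L); auto; apply (lt_succ M HM S0)).
    assert (Hp2 : p + o1 < L + o1) by (apply (add_lt_mono M HM S0); auto).
    split. apply H1'; auto. split. apply H2'; auto. split. apply H2'; auto. tauto.
  - exists o0. rewrite H2'. split; auto. apply (le_refl M HM S0). apply (lt_succ M HM S0).
Qed.

Definition g1F : pf := POr (PAnd (PEq (pp 1) (pp 3)) (PEq (pp 0) (pp 4))) (PAnd (PNot (PEq (pp 1) (pp 3))) (EntryP (pp 2) (pp 1) (pp 0))).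
Definition g2F : pf := POr (PAnd (PLe (pp 1) (pp 3)) (EntryP (pp 2) (pp 1) (pp 0)))
   (PAnd (PLt (pp 3) (pp 1)) (PExb (pS (pp 2)) (fun y => PAnd (EntryP (pp 2) (pp 1) (pv y)) (PEq (pp 0) (pS (pv y)))))).

Lemma g1_sat : forall v p c1 i0 j, sat M (scons v (scons p (scons c1 (scons i0 (scons j (ee M)))))) EF (g1F O) <->
  ((p = i0 /\ v = j) \/ (~ p = i0 /\ Entry M c1 p v)).
Proof.
  intros. rewrite <- EntryB_iff. unfold g1F, EntryB, RemB. dsl3. simpl. walk.
Qed.
Lemma g2_sat : forall v p c2 i0, sat M (scons v (scons p (scons c2 (scons i0 (ee M))))) EF (g2F O) <->
  ((le p i0 /\ Entry M c2 p v) \/ (i0 < p /\ exists y, y < c2 + o1 /\ (Entry M c2 p y /\ v = y + o1))).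
Proof.
  intros. assert (K : forall y, EntryB c2 p y <-> Entry M c2 p y) by apply EntryB_iff.
  setoid_rewrite <- K. unfold g2F, EntryB, RemB. dsl3. simpl. walk.
Qed.

Lemma sig_step : forall L, (forall V, exists i j, i < L /\ mem M (pair M j i) F /\ le V j) ->
  forall k c1 c2, Phi L c1 c2 k -> exists c1' c2', Phi L c1' c2' (k + o1).
Proof.
  intros L Hnb k c1 c2 [Hl1 [Hl2 [H0 [Hrel [z [Hz Hkz]]]]]].
  destruct (Hnb (c1 + o1)) as [i0 [j [Hi0 [Fj Hj]]]].
  assert (Hcj : c1 < j) by (apply (lt_le_S M HM S0); auto).
  destruct (Hrel i0 Hi0) as [v0 [x0 [y0 [Ev0 [Ex0 [Ey0 R0]]]]]].
  assert (Hv0 : v0 = o0 /\ y0 = x0).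
  { destruct R0 as [R0|[R1 [R2 R3]]]; auto. exfalso.
    rewrite (F_inj v0 j i0 R3 Fj) in Ev0. apply (entry_le M HM S0) in Ev0.
    apply (le_not_lt M HM S0 _ _ Ev0); auto. }
  destruct Hv0 as [-> ->].
  assert (HL : forall p, p < L -> p < L + o1) by (intros; apply (lt_trans M HM S0 _ L); auto; apply (lt_succ M HM S0)).
  assert (HL2 : forall p, p < L -> p + o1 < L + o1) by (intros; apply (add_lt_mono M HM S0); auto).
  destruct (code_fun L (c1 + j + o1) (g1F O) (scons c1 (scons i0 (scons j (ee M)))) EF) as [c1' [Hc1 Ec1]].
  { unfold g1F; d03. }
  { intros p Hp. destruct (classic (p = i0)) as [->|Hne].
    - exists j. rewrite g1_sat. split; auto. apply lt_S_of_le. apply (leE M HM S0). exists c1; ring.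
    - destruct (entry_ex' c1 L p Hl1 Hp) as [v [Ev Hv]]. exists v. rewrite g1_sat. split; auto.
      apply lt_S_of_le. apply (le_trans M HM S0 _ c1); auto. apply (leE M HM S0). exists j; ring. }
  { intros p v v' Hp. rewrite !g1_sat. intros [[A B]|[A B]] [[C D]|[C D]]; subst; try tauto.
    eapply (entry_fun M HM S0); eauto. }
  destruct (code_fun (L + o1) (c2 + o1 + o1) (g2F O) (scons c2 (scons i0 (ee M))) EF) as [c2' [Hc2 Ec2]].
  { unfold g2F; d03. }
  { intros p Hp. destruct (entry_ex' c2 (L + o1) p Hl2 Hp) as [y [Ey Hy]].
    destruct (trich M HM S0 i0 p) as [Hip|Hip].
    - exists (y + o1). rewrite g2_sat. split. apply (add_lt_mono M HM S0). apply lt_S_of_le; auto.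
      right. split; auto. exists y. split; auto. apply lt_S_of_le; auto.
    - exists y. rewrite g2_sat. split. apply (lt_trans M HM S0 _ (c2 + o1)). apply lt_S_of_le; auto. apply (lt_succ M HM S0).
      left. split; auto. destruct Hip as [->|Hip]. apply (le_refl M HM S0). apply (lt_le M HM S0); auto. }
  { intros p v v' Hp. rewrite !g2_sat. intros [[A B]|[A [y [_ [B B']]]]] [[C D]|[C [y' [_ [D D']]]]].
    - eapply (entry_fun M HM S0); eauto.
    - exfalso; apply (le_not_lt M HM S0 _ _ A); auto.
    - exfalso; apply (le_not_lt M HM S0 _ _ C); auto.
    - subst. rewrite (entry_fun M HM S0 _ _ _ _ B D). auto. }
  assert (E1 : forall p w, p < L -> (Entry M c1' p w <-> ((p = i0 /\ w = j) \/ (~ p = i0 /\ Entry M c1 p w)))).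
  { intros p w Hp. rewrite Ec1; auto. apply g1_sat. }
  assert (E2 : forall p w, p < L + o1 -> (Entry M c2' p w <-> ((le p i0 /\ Entry M c2 p w) \/ (i0 < p /\ exists y, y < c2 + o1 /\ (Entry M c2 p y /\ w = y + o1))))).
  { intros p w Hp. rewrite Ec2; auto. apply g2_sat. }
  exists c1', c2'. split; auto. split; auto. split.
  { apply E2. apply (lt_0_S M HM S0). left. split; auto. apply (le_0 M HM S0). }
  split.
  - intros p Hp. destruct (Hrel p Hp) as [v [x [y [Ev [Ex [Ey R]]]]]].
    destruct (trich M HM S0 p i0) as [Hpi|[Hpi|Hpi]].
    + exists v, x, y. split. apply E1; auto. right. split; auto. apply (lt_ne M HM S0); auto.
      split. apply E2; auto. left. split; auto. apply (lt_le M HM S0); auto.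
      split. apply E2; auto. left. split; auto. apply (lt_le_S M HM S0); auto. auto.
    + subst p. rewrite (entry_fun M HM S0 _ _ _ _ Ex Ex0) in *. rewrite (entry_fun M HM S0 _ _ _ _ Ey Ey0) in *.
      exists j, x0, (x0 + o1). split. apply E1; auto. split. apply E2; auto. left. split; auto. apply (le_refl M HM S0).
      split. apply E2; auto. right. split. apply (lt_succ M HM S0). exists x0. split; auto. apply lt_S_of_le. eapply (entry_le M HM S0); eauto.
      right. split. eapply F_ne0; eauto. auto.
    + exists v, (x + o1), (y + o1). split. apply E1; auto. right. split; auto. intro E; subst. eapply (lt_irrefl M HM S0); eauto.
      split. apply E2; auto. right. split; auto. exists x. split; auto. apply lt_S_of_le. eapply (entry_le M HM S0); eauto.
      split. apply E2; auto. right. split. apply (lt_trans M HM S0 _ p); auto. apply (lt_succ M HM S0).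
      exists y. split; auto. apply lt_S_of_le. eapply (entry_le M HM S0); eauto.
      destruct R as [[A B]|[A [B C]]]; [left|right]; subst; auto.
  - exists (z + o1). split. apply E2. apply (lt_succ M HM S0). right. split; auto. exists z. split; auto.
    apply lt_S_of_le. eapply (entry_le M HM S0); eauto.
    apply (add_le_mono M HM S0); auto.
Qed.

Lemma lt_cancel : forall x y, x + o1 < y + o1 -> x < y.
Proof.
  intros x y H. apply (ltE M HM S0) in H. destruct H as [z E]. apply (ltE M HM S0). exists z.
  apply (cancel M HM S0 _ _ o1). rewrite E. ring.
Qed.

Lemma count_bound : forall L c1 c2 k, Phi L c1 c2 k -> le k L.
Proof.
  intros L c1 c2 k [Hl1 [Hl2 [H0 [Hrel [z [Hz Hkz]]]]]].
  assert (K : forall p, p < L + o1 -> forall x, x < c2 + o1 -> EntryB c2 p x -> le x p).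
  { lazymatch goal with |- forall x, @?Q x =>
     apply (ind_D0 M HM (PImp (PLt (pp 0) (pS (pp 2))) (PAllb (pS (pp 1)) (fun x => PImp (EntryP (pp 1) (pp 0) (pv x)) (PLe (pv x) (pp 0)))) O) (scons c2 (scons L (ee M))) EF Q) end.
    - d03.
    - intros; unfold EntryB, RemB; dsl3; simpl; walk.
    - intros _ x _ Ex. rewrite EntryB_iff in Ex. rewrite (entry_fun M HM S0 _ _ _ _ Ex H0). apply (le_refl M HM S0).
    - intros p IH Hp x _ Ex. rewrite EntryB_iff in Ex. assert (Hp' : p < L) by (apply lt_cancel in Hp; auto).
      destruct (Hrel p Hp') as [v [x0 [y [Ev [Ex0 [Ey R]]]]]].
      rewrite (entry_fun M HM S0 _ _ _ _ Ex Ey).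
      assert (Hx0 : le x0 p).
      { apply IH. apply (lt_trans M HM S0 _ L); auto. apply (lt_succ M HM S0).
        apply lt_S_of_le. eapply (entry_le M HM S0); eauto. rewrite EntryB_iff; auto. }
      destruct R as [[_ ->]|[_ [-> _]]].
      + apply (le_trans M HM S0 _ p); auto. apply (lt_le M HM S0). apply (lt_succ M HM S0).
      + apply (add_le_mono M HM S0); auto. }
  apply (le_trans M HM S0 _ z); auto. apply (K L). apply (lt_succ M HM S0).
  apply lt_S_of_le. eapply (entry_le M HM S0); eauto. rewrite EntryB_iff; auto.
Qed.

Lemma bounded_pre : forall L, exists V, forall i j, i < L -> mem M (pair M j i) F -> j < V.
Proof.
  intro L. apply NNPP. intro Hn.
  assert (Hnb : forall V, exists i j, i < L /\ mem M (pair M j i) F /\ le V j).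
  { intro V. apply NNPP. intro H. apply Hn. exists V. intros i j Hi Fj.
    apply NNPP. intro Hj. apply H. exists i, j. split; auto. split; auto. apply (not_lt M HM S0); auto. }
  assert (K : forall k, SigM L k).
  { apply Sig_ind.
    - intros k Hk. apply SigM_iff in Hk. destruct Hk as [c1 [c2 Hk]]. apply SigM_iff.
      eapply sig_step; eauto.
    - apply SigM_iff. apply sig_base. }
  destruct (SigM_iff L (L + o1)) as [H _]. destruct (H (K _)) as [c1 [c2 Hp]].
  apply count_bound in Hp. apply (lt_not_le M HM S0 L (L + o1)); auto. apply (lt_succ M HM S0).
Qed.
End Bnd.

End P5.
Import P5.

Module P6.

Set Default Proof Using "All".
Section Main.
Variable M : L2str.
Hypothesis HM : RCA0 M.
Variable F : Set2 M.
Variable X : Set2 M.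
Hypothesis HF : InjFun M F.
Hypothesis HXinf : Infinite M X.
Hypothesis HXsub : Subset M X (InTf M F).
Local Notation S0 := F.
Local Notation N := (Num M).
Local Notation "x + y" := (add M x y).
Local Notation "x * y" := (mul M x y).
Local Notation "x < y" := (lt M x y).
Local Notation o0 := (zero M).
Local Notation o1 := (one M).
Local Notation le := (le M).
Add Ring Mring : (Msrt M HM S0).
Local Notation mm := (mm M).
Local Notation RemB := (RemB M).
Local Notation EntryB := (EntryB M).
Local Notation LenB := (LenB M).
Definition EX : nat -> Set2 M := fun k => match k with 0 => F | _ => X end.

Lemma lt_S_of_le' : forall x y, le x y -> x < y + o1.
Proof. intros. apply (ltS_le M HM S0); auto. Qed.

Lemma gE_sat : forall v i c, sat M (scons v (scons i (scons c (ee M)))) EX (EntryP (pp 2) (pp 1) (pp 0) O) <-> Entry M c i v.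
Proof. intros. rewrite <- (EntryB_iff M HM S0). unfold EntryB, RemB. dsl3. simpl. walk. Qed.

Lemma long : forall L, exists c, mem M c X /\ exists l, Len M c l /\ le L l.
Proof.
  intro L. apply NNPP. intro Hn.
  assert (Hs : forall c l, mem M c X -> Len M c l -> l < L).
  { intros c l Hc Hl. apply NNPP. intro H. apply Hn. exists c. split; auto. exists l. split; auto. apply (not_lt M HM S0); auto. }
  destruct (bounded_pre M HM F HF L) as [V0 HV0].
  destruct (code_lemma M HM S0 L (V0 + o1)) as [B HB].
  destruct (HXinf B) as [c [Hc HcX]].
  destruct (HXsub c HcX) as [[_ Hmin] [l [Hl [T1 T2]]]].
  assert (HlL : l < L) by eauto.
  destruct (HB l (lt_le M HM S0 _ _ HlL) (EntryP (pp 2) (pp 1) (pp 0) O) ltac:(d03) (scons c (ee M)) EX) as [c' [Hc'B [Hc'l Hc'e]]].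
  - intros i Hi. destruct (entry_ex M HM S0 c l i Hl Hi) as [v Hv]. exists v. rewrite gE_sat. split; auto.
    destruct (classic (v = o0)) as [->|Hv0].
    + apply (lt_0_S M HM S0).
    + apply (lt_trans M HM S0 _ V0). apply (HV0 i v). eapply (lt_trans M HM S0); eauto. apply T1; auto.
      apply (lt_succ M HM S0).
  - intros i v v' _. rewrite !gE_sat. apply (entry_fun M HM S0).
  - apply (Hmin c'). eapply (le_lt_trans M HM S0); eauto.
    exists l. split; auto. split; auto. intros i v Hi. rewrite Hc'e; auto. apply gE_sat.
Qed.

Lemma incorrect : ~ RangeExists M F -> forall B, exists t, mem M t X /\ exists l, Len M t l /\ B < l /\
  exists i j, i < l /\ Entry M t i o0 /\ mem M (pair M j i) F.
Proof.
  intros HR B. apply NNPP. intro Hn. apply HR.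
  assert (H : forall t l i j, mem M t X -> Len M t l -> B < l -> i < l -> Entry M t i o0 -> ~ mem M (pair M j i) F).
  { intros t l i j H1 H2 H3 H4 H5 H6. apply Hn. exists t. split; auto. exists l. split; auto. split; auto. exists i, j. auto. }
  destruct (comp M HM (PEx (fun j => PMem (ppair (pv j) (pp 0)) 0) O)
     (PAll (fun t => PImp (PMem (pv t) 1) (PAllb (pS (pv t)) (fun l => PImp (PAnd (LenP (pv t) (pv l)) (PAnd (PLt (pp 0) (pv l)) (PLt (pp 1) (pv l)))) (PNot (EntryP (pv t) (pp 0) pz))))) O)
     (scons B (ee M)) EX (fun n => exists j, mem M (pair M j n) F)) as [R HRm].
  - apply Sigma_fex. d03.
  - apply Pi_fall. d03.
  - intro n. dsl3. simpl. walk.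
  - intro n. transitivity (forall t, mem M t X -> forall l, l < t + o1 -> (LenB t l /\ (n < l /\ B < l)) -> ~ EntryB t n o0).
    2: { unfold EntryB, LenB, RemB. dsl3. simpl. walk. }
    split.
    + intros [j Fj] t Ht l _ [Hl [Hnl HBl]] He. rewrite (LenB_iff M HM S0) in Hl. rewrite (EntryB_iff M HM S0) in He.
      exact (H t l n j Ht Hl HBl Hnl He Fj).
    + intro Hq. destruct (long (n + B + o1)) as [t [Ht [l [Hl Hle]]]].
      destruct (HXsub t Ht) as [_ [l' [Hl' [T1 T2]]]]. rewrite (len_unique M HM S0 t l' l Hl' Hl) in *.
      assert (Hnl : n < l). { eapply (lt_le_trans M HM S0); eauto. apply (ltE M HM S0). exists B; ring. }
      assert (HBl : B < l). { eapply (lt_le_trans M HM S0); eauto. apply (ltE M HM S0). exists n; ring. }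
      destruct (entry_ex M HM S0 t l n Hl Hnl) as [w Hw].
      assert (Hw0 : w <> o0).
      { intro E; subst w. apply (Hq t Ht l). apply lt_S_of_le'. eapply (len_le M HM S0); eauto.
        rewrite (LenB_iff M HM S0). auto. rewrite (EntryB_iff M HM S0). auto. }
      exists w. apply T1; auto.
  - exists R. intro i. rewrite HRm. tauto.
Qed.
End Main.

End P6.
Import P6.

Module P7.

Definition StepP (p p' : pt) : pf := PExb (pS p') (fun t => PExb (pS p') (fun j => PAnd (PEq p' (ppair (pv t) (pv j)))
  (PAnd (PMem (pv t) 1) (PExb (pS (pv t)) (fun l => PAnd (LenP (pv t) (pv l)) (PAnd (PLt p (pv l))
   (PExb (pv l) (fun i => PAnd (EntryP (pv t) (pv i) pz) (PMem (ppair (pv j) (pv i)) 0))))))))).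
Definition NextP (p p' : pt) : pf := PAnd (StepP p p') (PAllb p' (fun q => PNot (StepP p (pv q)))).
Definition HistP (h n : pt) : pf := PAnd (LenP h (pS (pS n))) (PAnd (EntryP h pz pz)
  (PAllb (pS n) (fun k => PExb (pS h) (fun x => PExb (pS h) (fun y => PAnd (EntryP h (pv k) (pv x))
     (PAnd (EntryP h (pS (pv k)) (pv y)) (NextP (pv x) (pv y)))))))).
Ltac dsl4 := cbv beta iota delta [PEq PLt PMem PNot PAnd POr PImp PEx PAll PExb PAllb PLe pv pp pz po padd pmul pS ppair mmP RemP EntryP LenP StepP NextP HistP].
Ltac d04 := dsl4; simpl; repeat (constructor || apply D0_ren || assumption).

Definition agreeF : pf := (PImp (PLt (pp 0) (pS (pS (pp 3)))) (PImp (PLt (pp 0) (pS (pS (pp 4)))) (PAllb (pS (pp 1)) (fun x => PAllb (pS (pp 2)) (fun y => PImp (EntryP (pp 1) (pp 0) (pv x)) (PImp (EntryP (pp 2) (pp 0) (pv y)) (PEq (pv x) (pv y)))))))).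
Definition monoF : pf := (PImp (PLt (pp 0) (pS (pS (pp 2)))) (PAllb (pp 0) (fun a => PAllb (pS (pp 1)) (fun x => PAllb (pS (pp 1)) (fun y => PImp (EntryP (pp 1) (pv a) (pv x)) (PImp (EntryP (pp 1) (pp 0) (pv y)) (PLt (pv x) (pv y)))))))).

Set Default Proof Using "All".
Section Seq.
Variable M : L2str.
Hypothesis HM : RCA0 M.
Variable F : Set2 M.
Variable X : Set2 M.
Hypothesis HF : InjFun M F.
Hypothesis HXinf : Infinite M X.
Hypothesis HXsub : Subset M X (InTf M F).
Hypothesis HR : ~ RangeExists M F.
Local Notation S0 := F.
Local Notation N := (Num M).
Local Notation "x + y" := (add M x y).
Local Notation "x * y" := (mul M x y).
Local Notation "x < y" := (lt M x y).
Local Notation o0 := (zero M).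
Local Notation o1 := (one M).
Local Notation le := (le M).
Add Ring Mring : (Msrt M HM S0).
Local Notation mm := (mm M).
Local Notation RemB := (RemB M).
Local Notation EntryB := (EntryB M).
Local Notation LenB := (LenB M).
Local Notation EX := (EX M F X).

Definition StepB (p p' : N) : Prop := exists t, t < p' + o1 /\ exists j, j < p' + o1 /\ (p' = pair M t j /\
  (mem M t X /\ exists l, l < t + o1 /\ (LenB t l /\ (p < l /\ exists i, i < l /\ (EntryB t i o0 /\ mem M (pair M j i) F))))).
Definition NextB (p p' : N) : Prop := StepB p p' /\ forall q, q < p' -> ~ StepB p q.
Definition HistB (h n : N) : Prop := LenB h (n + o1 + o1) /\ (EntryB h o0 o0 /\
  forall k, k < n + o1 -> exists x, x < h + o1 /\ exists y, y < h + o1 /\ (EntryB h k x /\ (EntryB h (k + o1) y /\ NextB x y))).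

Definition Step (p p' : N) : Prop := exists t j l i, p' = pair M t j /\ mem M t X /\ Len M t l /\ p < l /\ i < l /\
  Entry M t i o0 /\ mem M (pair M j i) F.
Definition Next (p p' : N) : Prop := Step p p' /\ forall q, q < p' -> ~ Step p q.
Definition Hist (h n : N) : Prop := Len M h (n + o1 + o1) /\ Entry M h o0 o0 /\
  forall k, k < n + o1 -> exists x y, Entry M h k x /\ Entry M h (k + o1) y /\ Next x y.

Lemma lt_S_of_le'' : forall x y, le x y -> x < y + o1.
Proof. intros. apply (ltS_le M HM S0); auto. Qed.
Lemma EntryBi : forall c i v, EntryB c i v <-> Entry M c i v.
Proof. apply (EntryB_iff M HM S0). Qed.
Lemma LenBi : forall c l, LenB c l <-> Len M c l.
Proof. apply (LenB_iff M HM S0). Qed.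

Lemma StepB_iff : forall p p', StepB p p' <-> Step p p'.
Proof.
  intros p p'. split.
  - intros [t [_ [j [_ [E [Ht [l [_ [Hl [Hpl [i [Hi [Hi0 Fj]]]]]]]]]]]]].
    rewrite LenBi in Hl. rewrite EntryBi in Hi0. exists t, j, l, i. tauto.
  - intros [t [j [l [i [E [Ht [Hl [Hpl [Hi [Hi0 Fj]]]]]]]]]]. subst p'.
    exists t. split. apply lt_S_of_le''. apply (pair_ge1 M HM S0).
    exists j. split. apply lt_S_of_le''. apply (pair_ge2 M HM S0).
    split; auto. split; auto. exists l. split. apply lt_S_of_le''. eapply (len_le M HM S0); eauto.
    rewrite LenBi. split; auto. split; auto. exists i. split; auto. rewrite EntryBi. auto.
Qed.
Lemma NextB_iff : forall p p', NextB p p' <-> Next p p'.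
Proof.
  intros p p'. unfold NextB, Next. rewrite StepB_iff. split; intros [A B]; split; auto;
  intros q Hq; rewrite <- StepB_iff || rewrite StepB_iff; auto.
Qed.
Lemma HistB_iff : forall h n, HistB h n <-> Hist h n.
Proof.
  intros h n. unfold HistB, Hist. rewrite LenBi, EntryBi. split; intros [A [B C]]; split; auto; split; auto.
  - intros k Hk. destruct (C k Hk) as [x [_ [y [_ [D [E G]]]]]]. rewrite EntryBi in D, E. rewrite NextB_iff in G.
    exists x, y. auto.
  - intros k Hk. destruct (C k Hk) as [x [y [D [E G]]]]. exists x. split. apply lt_S_of_le''. eapply (entry_le M HM S0); eauto.
    exists y. split. apply lt_S_of_le''. eapply (entry_le M HM S0); eauto. rewrite !EntryBi, NextB_iff. auto.
Qed.

Lemma step_ex : forall p, exists p', Step p p'.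
Proof.
  intro p. destruct (incorrect M HM F X HF HXinf HXsub HR p) as [t [Ht [l [Hl [Hpl [i [j [Hi [Hi0 Fj]]]]]]]]].
  exists (pair M t j), t, j, l, i. tauto.
Qed.
Lemma next_ex : forall p, exists p', Next p p'.
Proof.
  intro p. destruct (lnp M HM S0 (StepP (pp 1) (pp 0) O) ltac:(d04) (scons p (ee M)) EX) as [x [Hx Hmin]].
  - destruct (step_ex p) as [p' Hp']. exists p'. rewrite <- StepB_iff in Hp'. revert Hp'.
    unfold StepB, EntryB, LenB, RemB. dsl4. simpl. apply iff_refl.
  - exists x. rewrite <- NextB_iff. split.
    + revert Hx. unfold StepB, EntryB, LenB, RemB. dsl4. simpl. apply iff_refl.
    + intros q Hq. specialize (Hmin q Hq). revert Hmin. unfold StepB, EntryB, LenB, RemB. dsl4. simpl. apply iff_refl.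
Qed.
Lemma next_fun : forall p a b, Next p a -> Next p b -> a = b.
Proof.
  intros p a b [Ha Ha'] [Hb Hb']. destruct (trich M HM S0 a b) as [H|[H|H]]; auto.
  exfalso; eapply Hb'; eauto. exfalso; eapply Ha'; eauto.
Qed.
Lemma step_gt : forall p p', Step p p' -> p < p'.
Proof.
  intros p p' [t [j [l [i [E [Ht [Hl [Hpl _]]]]]]]]. subst p'. eapply (lt_le_trans M HM S0); eauto.
  apply (le_trans M HM S0 _ t). eapply (len_le M HM S0); eauto. apply (pair_ge1 M HM S0).
Qed.

Lemma one_ne0' : o1 <> o0.
Proof. intro E. apply (succ_ne0 M HM S0 o0). rewrite (add0l M HM S0). auto. Qed.

Lemma hist_ex : forall n, exists h, Hist h n.
Proof.
  assert (K : forall n, exists h, HistB h n).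
  { lazymatch goal with |- forall zz, @?Q zz =>
     apply (ind_S1 M HM (PEx (fun h => HistP (pv h) (pp 0)) O) (ee M) EX Q) end.
    - apply Sigma_fex. d04.
    - intros. unfold HistB, NextB, StepB, EntryB, LenB, RemB. dsl4. simpl. walk.
    - destruct (next_ex o0) as [y0 Hy0].
      destruct (code_fun M HM F HF (o0 + o1 + o1) (y0 + o1)
        (POr (PAnd (PEq (pp 1) pz) (PEq (pp 0) pz)) (PAnd (PNot (PEq (pp 1) pz)) (PEq (pp 0) (pp 2))) O) (scons y0 (ee M)) EX)
        as [h [Hh Eh]].
      + d04.
      + intros k _. dsl4. simpl. destruct (classic (k = o0)) as [->|Hk].
        * exists o0. split. apply (lt_0_S M HM S0). auto.
        * exists y0. split. apply (lt_succ M HM S0). auto.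
      + intros k v v' _. dsl4. simpl. intros [[A B]|[A B]] [[C D]|[C D]]; subst; tauto.
      + exists h. apply HistB_iff. split; auto. split.
        * apply Eh. apply (lt_0_S M HM S0). dsl4. simpl. auto.
        * intros k Hk. apply (ltS M HM S0) in Hk. destruct Hk as [Hk| ->]. exfalso; eapply (lt0 M HM S0); eauto.
          exists o0, y0. split. apply Eh. apply (lt_0_S M HM S0). dsl4. simpl. auto.
          split; auto. apply Eh. apply (lt_succ M HM S0). dsl4. simpl. right. split; auto. apply (succ_ne0 M HM S0).
    - intros n Hn. destruct Hn as [h Hh]. rewrite HistB_iff in Hh. destruct Hh as [Hl [H0 Hs]].
      destruct (entry_ex M HM S0 h _ (n + o1) Hl (lt_succ M HM S0 _)) as [y Hy].
      destruct (next_ex y) as [y' Hy'].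
      assert (Gs : forall v k, sat M (scons v (scons k (scons h (scons (n + o1 + o1) (scons y' (ee M)))))) EX
          (POr (PAnd (PLt (pp 1) (pp 3)) (EntryP (pp 2) (pp 1) (pp 0))) (PAnd (PNot (PLt (pp 1) (pp 3))) (PEq (pp 0) (pp 4))) O)
          <-> ((k < n + o1 + o1 /\ Entry M h k v) \/ (~ k < n + o1 + o1 /\ v = y'))).
      { intros. rewrite <- EntryBi. unfold EntryB, RemB. dsl4. simpl. walk. }
      destruct (code_fun M HM F HF (n + o1 + o1 + o1) (h + y' + o1)
        (POr (PAnd (PLt (pp 1) (pp 3)) (EntryP (pp 2) (pp 1) (pp 0))) (PAnd (PNot (PLt (pp 1) (pp 3))) (PEq (pp 0) (pp 4))) O)
        (scons h (scons (n + o1 + o1) (scons y' (ee M)))) EX) as [h' [Hh' Eh']].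
      + d04.
      + intros k _. destruct (classic (k < n + o1 + o1)) as [Hk|Hk].
        * destruct (entry_ex M HM S0 h _ k Hl Hk) as [v Hv]. exists v. rewrite Gs. split; auto.
          apply lt_S_of_le''. apply (le_trans M HM S0 _ h). eapply (entry_le M HM S0); eauto. apply (le_add M HM S0).
        * exists y'. rewrite Gs. split; auto. apply lt_S_of_le''. apply (leE M HM S0). exists h; ring.
      + intros k v v' _. rewrite !Gs. intros [[A B]|[A B]] [[C D]|[C D]]; subst; try tauto.
        eapply (entry_fun M HM S0); eauto.
      + exists h'. apply HistB_iff. split; auto. split.
        * rewrite Eh', Gs. left. split; auto. apply (lt_0_S M HM S0). apply (lt_0_S M HM S0).
        * intros k Hk. assert (Hk2 : k < n + o1 + o1 + o1).
          { apply (lt_trans M HM S0 _ (n + o1 + o1)); auto. apply (lt_succ M HM S0). }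
          assert (Hk3 : k + o1 < n + o1 + o1 + o1) by (apply (add_lt_mono M HM S0); auto).
          destruct (entry_ex M HM S0 h _ k Hl Hk) as [x Hx].
          destruct (classic (k + o1 < n + o1 + o1)) as [Hk1|Hk1].
          -- assert (Hkn : k < n + o1) by (apply (lt_cancel M HM S0); auto).
             destruct (Hs k Hkn) as [x' [y'' [Hx' [Hy'' Hn']]]].
             exists x', y''. split. rewrite Eh', Gs; auto. split. rewrite Eh', Gs; auto. auto.
          -- assert (Ek : k = n + o1).
             { apply (ltS M HM S0) in Hk. destruct Hk as [Hk| ->]; auto. exfalso. apply Hk1. apply (add_lt_mono M HM S0); auto. }
             subst k.
             exists y, y'. split. rewrite Eh', Gs; auto. split. rewrite Eh', Gs; auto. auto. }
  intro n. destruct (K n) as [h Hh]. exists h. apply HistB_iff; auto.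
Qed.

Lemma hist_agree : forall h h' n n', Hist h n -> Hist h' n' -> forall k, k < n + o1 + o1 -> k < n' + o1 + o1 ->
  forall x y, Entry M h k x -> Entry M h' k y -> x = y.
Proof.
  intros h h' n n' [Hl [H0 Hs]] [Hl' [H0' Hs']].
  assert (K : forall k, k < n + o1 + o1 -> k < n' + o1 + o1 -> forall x, x < h + o1 -> forall y, y < h' + o1 ->
     EntryB h k x -> EntryB h' k y -> x = y).
  { lazymatch goal with |- forall zz, @?Q zz =>
     apply (ind_D0 M HM (agreeF O)
       (scons h (scons h' (scons n (scons n' (ee M))))) EX Q) end.
    - unfold agreeF; d04.
    - intros. unfold agreeF, EntryB, RemB. dsl4. simpl. walk.
    - intros _ _ x _ y _ Ex Ey. rewrite EntryBi in Ex, Ey.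
      rewrite (entry_fun M HM S0 _ _ _ _ Ex H0), (entry_fun M HM S0 _ _ _ _ Ey H0'). auto.
    - intros k IH Hk Hk' x _ y _ Ex Ey. rewrite EntryBi in Ex, Ey.
      assert (A : k < n + o1) by (apply (lt_cancel M HM S0 HF); auto).
      assert (A' : k < n' + o1) by (apply (lt_cancel M HM S0 HF); auto).
      destruct (Hs k A) as [x1 [y1 [Ex1 [Ey1 N1]]]]. destruct (Hs' k A') as [x2 [y2 [Ex2 [Ey2 N2]]]].
      assert (x1 = x2).
      { apply IH. apply (lt_trans M HM S0 _ (n + o1)); auto. apply (lt_succ M HM S0).
        apply (lt_trans M HM S0 _ (n' + o1)); auto. apply (lt_succ M HM S0).
        apply lt_S_of_le''. eapply (entry_le M HM S0); eauto.
        apply lt_S_of_le''. eapply (entry_le M HM S0); eauto.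
        rewrite EntryBi; auto. rewrite EntryBi; auto. }
      subst x2. rewrite (entry_fun M HM S0 _ _ _ _ Ex Ey1), (entry_fun M HM S0 _ _ _ _ Ey Ey2).
      eapply next_fun; eauto. }
  intros k Hk Hk' x y Ex Ey. apply (K k); auto.
  apply lt_S_of_le''. eapply (entry_le M HM S0); eauto.
  apply lt_S_of_le''. eapply (entry_le M HM S0); eauto.
  rewrite EntryBi; auto. rewrite EntryBi; auto.
Qed.

Lemma hist_mono : forall h n, Hist h n -> forall b, b < n + o1 + o1 -> forall a x y, a < b ->
  Entry M h a x -> Entry M h b y -> x < y.
Proof.
  intros h n [Hl [H0 Hs]].
  assert (K : forall b, b < n + o1 + o1 -> forall a, a < b -> forall x, x < h + o1 -> forall y, y < h + o1 ->
     EntryB h a x -> EntryB h b y -> x < y).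
  { lazymatch goal with |- forall zz, @?Q zz =>
     apply (ind_D0 M HM (monoF O)
       (scons h (scons n (ee M))) EX Q) end.
    - unfold monoF; d04.
    - intros. unfold monoF, EntryB, RemB. dsl4. simpl. walk.
    - intros _ a Ha. exfalso. eapply (lt0 M HM S0); eauto.
    - intros b IH Hb a Ha x _ y _ Ex Ey. rewrite EntryBi in Ex, Ey.
      assert (A : b < n + o1) by (apply (lt_cancel M HM S0 HF); auto).
      destruct (Hs b A) as [x1 [y1 [Ex1 [Ey1 N1]]]]. rewrite (entry_fun M HM S0 _ _ _ _ Ey Ey1).
      assert (L1 : x1 < y1) by (apply step_gt; destruct N1; auto).
      apply (ltS M HM S0) in Ha. destruct Ha as [Ha| ->].
      + apply (lt_trans M HM S0 _ x1); auto. apply (IH (lt_trans M HM S0 _ _ _ A (lt_succ M HM S0 _)) a Ha).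
        apply lt_S_of_le''. eapply (entry_le M HM S0); eauto.
        apply lt_S_of_le''. eapply (entry_le M HM S0); eauto.
        rewrite EntryBi; auto. rewrite EntryBi; auto.
      + rewrite (entry_fun M HM S0 _ _ _ _ Ex Ex1). auto. }
  intros b Hb a x y Hab Ex Ey. apply (K b Hb a Hab).
  apply lt_S_of_le''. eapply (entry_le M HM S0); eauto.
  apply lt_S_of_le''. eapply (entry_le M HM S0); eauto.
  rewrite EntryBi; auto. rewrite EntryBi; auto.
Qed.
End Seq.

End P7.
Import P7.

Module P8.

Definition YTail (h n s : nat) : pf := PExb (pS (pv h)) (fun y => PAnd (EntryP (pv h) (pS (pv n)) (pv y)) (PExb (pS (pv y)) (fun j => PEq (pv y) (ppair (pv s) (pv j))))).
Definition YSF : pf := PEx (fun h => PExb (pS (pp 0)) (fun n => PExb (pS (pp 0)) (fun s =>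
   PAnd (PEq (pp 0) (ppair (pv n) (pv s))) (PAnd (HistP (pv h) (pv n)) (YTail h n s))))).
Definition YPF : pf := PAll (fun h => PExb (pS (pp 0)) (fun n => PExb (pS (pp 0)) (fun s =>
   PAnd (PEq (pp 0) (ppair (pv n) (pv s))) (PImp (HistP (pv h) (pv n)) (YTail h n s))))).
Definition KBF : pf := PAnd (PLt (pp 0) (pp 3)) (PAnd (EntryP (pp 1) (pp 0) pz) (PNot (EntryP (pp 2) (pp 0) pz))).

Set Default Proof Using "All".
Section Fin.
Variable M : L2str.
Hypothesis HM : RCA0 M.
Variable F : Set2 M.
Variable X : Set2 M.
Hypothesis HF : InjFun M F.
Hypothesis HXinf : Infinite M X.
Hypothesis HXsub : Subset M X (InTf M F).
Hypothesis HR : ~ RangeExists M F.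
Local Notation S0 := F.
Local Notation N := (Num M).
Local Notation "x + y" := (add M x y).
Local Notation "x * y" := (mul M x y).
Local Notation "x < y" := (lt M x y).
Local Notation o0 := (zero M).
Local Notation o1 := (one M).
Local Notation le := (le M).
Add Ring Mring : (Msrt M HM S0).
Local Notation RemB := (RemB M).
Local Notation EntryB := (EntryB M).
Local Notation LenB := (LenB M).
Local Notation EX := (EX M F X).
Local Notation Hist := (Hist M F X).
Local Notation HistB := (HistB M F X).
Local Notation Next := (Next M F X).
Local Notation Step := (Step M F X).

Definition YTB (h n s : N) : Prop := exists y, y < h + o1 /\ (EntryB h (n + o1) y /\ exists j, j < y + o1 /\ y = pair M s j).
Definition YSB (z : N) : Prop := exists h, exists n, n < z + o1 /\ exists s, s < z + o1 /\ (z = pair M n s /\ (HistB h n /\ YTB h n s)).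
Definition YPB (z : N) : Prop := forall h, exists n, n < z + o1 /\ exists s, s < z + o1 /\ (z = pair M n s /\ (HistB h n -> YTB h n s)).
Definition Yc (z : N) : Prop := exists n s h j, z = pair M n s /\ Hist h n /\ Entry M h (n + o1) (pair M s j).

Lemma ltSl : forall x y, le x y -> x < y + o1.
Proof. intros. apply (ltS_le M HM S0); auto. Qed.
Lemma EBi : forall c i v, EntryB c i v <-> Entry M c i v.
Proof. apply (EntryB_iff M HM S0). Qed.

Lemma YTB_iff : forall h n s, YTB h n s <-> exists j, Entry M h (n + o1) (pair M s j).
Proof.
  intros h n s. split.
  - intros [y [_ [Ey [j [_ ->]]]]]. rewrite EBi in Ey. eauto.
  - intros [j Ej]. exists (pair M s j). split. apply ltSl. eapply (entry_le M HM S0); eauto.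
    split. rewrite EBi; auto. exists j. split; auto. apply ltSl. apply (pair_ge2 M HM S0).
Qed.

Lemma YSB_iff : forall z, YSB z <-> Yc z.
Proof.
  intro z. split.
  - intros [h [n [_ [s [_ [E [Hh Ht]]]]]]]. rewrite (HistB_iff M HM F X HF HXinf HXsub HR) in Hh. rewrite YTB_iff in Ht.
    destruct Ht as [j Hj]. exists n, s, h, j. auto.
  - intros [n [s [h [j [E [Hh Hj]]]]]]. exists h, n. split. rewrite E. apply ltSl. apply (pair_ge1 M HM S0).
    exists s. split. rewrite E. apply ltSl. apply (pair_ge2 M HM S0). split; auto.
    rewrite (HistB_iff M HM F X HF HXinf HXsub HR), YTB_iff. eauto.
Qed.

Lemma YPB_iff : forall z, YPB z <-> Yc z.
Proof.
  intro z. split.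
  - intro H. destruct (H o0) as [n [_ [s [_ [E _]]]]].
    destruct (hist_ex M HM F X HF HXinf HXsub HR n) as [h Hh].
    destruct (H h) as [n' [_ [s' [_ [E' Ht]]]]]. rewrite E in E'. apply (pair_inj M HM S0) in E'. destruct E' as [<- <-].
    rewrite (HistB_iff M HM F X HF HXinf HXsub HR), YTB_iff in Ht. destruct (Ht Hh) as [j Hj]. exists n, s, h, j. auto.
  - intros [n [s [h0 [j [E [Hh0 Hj0]]]]]] h. exists n. split. rewrite E. apply ltSl. apply (pair_ge1 M HM S0).
    exists s. split. rewrite E. apply ltSl. apply (pair_ge2 M HM S0). split; auto.
    rewrite (HistB_iff M HM F X HF HXinf HXsub HR), YTB_iff. intro Hh.
    destruct Hh as [Hl [H0 Hs]]. 
    destruct (entry_ex M HM S0 h _ (n + o1) Hl (lt_succ M HM S0 _)) as [y Hy].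
    exists j. replace (pair M s j) with y; auto.
    eapply (hist_agree M HM F X HF HXinf HXsub HR h h0 n n); eauto.
    split; auto. apply (lt_succ M HM S0). apply (lt_succ M HM S0).
Qed.

Lemma Y_ex : exists Y, forall z, mem M z Y <-> Yc z.
Proof.
  apply (comp M HM (YSF O) (YPF O) (ee M) EX).
  - apply Sigma_fex. unfold YSF, YTail. d04.
  - apply Pi_fall. unfold YPF, YTail. d04.
  - intro z. rewrite <- YSB_iff. unfold YSF, YTail, YSB, YTB, HistB, NextB, StepB, EntryB, LenB, RemB. dsl4. simpl. walk.
  - intro z. rewrite <- YPB_iff. unfold YPF, YTail, YPB, YTB, HistB, NextB, StepB, EntryB, LenB, RemB. dsl4. simpl. walk.
Qed.

Variable Y : Set2 M.
Hypothesis HY : forall z, mem M z Y <-> Yc z.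
Local Notation HI := (HistB_iff M HM F X HF HXinf HXsub HR).

Lemma Ymem : forall n s, mem M (pair M n s) Y <-> exists h j, Hist h n /\ Entry M h (n + o1) (pair M s j).
Proof.
  intros n s. rewrite HY. split.
  - intros [n' [s' [h [j [E [Hh Hj]]]]]]. apply (pair_inj M HM S0) in E. destruct E as [<- <-]. eauto.
  - intros [h [j [Hh Hj]]]. exists n, s, h, j. auto.
Qed.

Lemma Yat : forall n s, mem M (pair M n s) Y -> forall h m, Hist h m -> n < m + o1 -> exists j, Entry M h (n + o1) (pair M s j).
Proof.
  intros n s Hy h m Hh Hnm. rewrite Ymem in Hy. destruct Hy as [h0 [j [Hh0 Hj]]].
  assert (Hk : n + o1 < m + o1 + o1) by (apply (add_lt_mono M HM S0); auto).
  destruct Hh as [Hl [H0 Hs]].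
  destruct (entry_ex M HM S0 h _ (n + o1) Hl Hk) as [y Hyy]. exists j.
  replace (pair M s j) with y; auto.
  eapply (hist_agree M HM F X HF HXinf HXsub HR h h0 m n); eauto. split; auto. apply (lt_succ M HM S0).
Qed.

Lemma step_unpack : forall x s j, Step x (pair M s j) -> mem M s X /\ exists l i, Len M s l /\ x < l /\ i < l /\
  Entry M s i o0 /\ mem M (pair M j i) F.
Proof.
  intros x s j [t [j' [l [i [E [Ht [Hl [Hxl [Hi [Hi0 Fj]]]]]]]]]]. apply (pair_inj M HM S0) in E. destruct E as [<- <-].
  split; auto. exists l, i. auto.
Qed.

Lemma pairs : forall n m s t, n < m -> mem M (pair M n s) Y -> mem M (pair M m t) Y ->
  exists jn ls lt i0, mem M s X /\ mem M t X /\ Len M s ls /\ Len M t lt /\ pair M s jn < lt /\ i0 < ls /\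
   Entry M s i0 o0 /\ mem M (pair M jn i0) F.
Proof.
  intros n m s t Hnm Hs Ht.
  destruct (hist_ex M HM F X HF HXinf HXsub HR m) as [h Hh].
  assert (Hnm1 : n < m + o1) by (apply (lt_trans M HM S0 _ m); auto; apply (lt_succ M HM S0)).
  destruct (Yat n s Hs h m Hh Hnm1) as [jn Ejn].
  destruct (Yat m t Ht h m Hh (lt_succ M HM S0 _)) as [jm Ejm].
  pose proof Hh as [Hl [H0 Hst]].
  destruct (Hst n Hnm1) as [xn [yn [Exn [Eyn Nn]]]]. rewrite (entry_fun M HM S0 _ _ _ _ Eyn Ejn) in Nn.
  destruct (Hst m (lt_succ M HM S0 _)) as [xm [ym [Exm [Eym Nm]]]]. rewrite (entry_fun M HM S0 _ _ _ _ Eym Ejm) in Nm.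
  destruct (step_unpack _ _ _ (proj1 Nn)) as [HsX [ls [i0 [Hls [_ [Hi0 [Ei0 Fi0]]]]]]].
  destruct (step_unpack _ _ _ (proj1 Nm)) as [HtX [lt [i1 [Hlt [Hxm _]]]]].
  exists jn, ls, lt, i0. do 4 (split; auto). split; auto.
  eapply (le_lt_trans M HM S0); eauto.
  apply (lt_le_S M HM S0) in Hnm. destruct Hnm as [Hnm|Hnm].
  - apply (lt_le M HM S0). eapply (hist_mono M HM F X HF HXinf HXsub HR h m Hh m); eauto. apply (lt_trans M HM S0 _ (m + o1)); apply (lt_succ M HM S0).
  - right. rewrite <- Hnm in Exm. eapply (entry_fun M HM S0); eauto.
Qed.

Lemma wext : forall s t ls lt, mem M s X -> mem M t X -> Len M s ls -> Len M t lt -> s < lt ->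
  forall i v, i < ls -> Entry M s i v -> v <> o0 -> Entry M t i v.
Proof.
  intros s t ls lt Hs Ht Hls Hlt Hslt i v Hi Ev Hv0.
  destruct (HXsub s Hs) as [_ [ls' [Hls' [T1 _]]]]. rewrite (len_unique M HM S0 _ _ _ Hls' Hls) in *.
  destruct (HXsub t Ht) as [_ [lt' [Hlt' [U1 U2]]]]. rewrite (len_unique M HM S0 _ _ _ Hlt' Hlt) in *.
  assert (Fv : mem M (pair M v i) F) by auto.
  assert (Hvlt : v < lt) by (eapply (le_lt_trans M HM S0); eauto; eapply (entry_le M HM S0); eauto).
  assert (Hilt : i < lt).
  { apply (lt_trans M HM S0 _ ls); auto. apply (le_lt_trans M HM S0 _ s); auto. eapply (len_le M HM S0); eauto. }
  destruct (entry_ex M HM S0 t lt i Hlt Hilt) as [w Ew].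
  assert (Hw : w <> o0) by (eapply U2; eauto).
  assert (Fw : mem M (pair M w i) F) by auto.
  rewrite <- (F_inj M HM F HF _ _ _ Fw Fv). auto.
Qed.

Lemma KBF_sat : forall i s t ls, sat M (scons i (scons s (scons t (scons ls (ee M))))) EX (KBF O) <->
  (i < ls /\ Entry M s i o0 /\ ~ Entry M t i o0).
Proof. intros. rewrite <- !EBi. unfold KBF, EntryB, RemB. dsl4. simpl. walk. Qed.

Lemma kb : forall s t ls lt i0 jn, mem M s X -> mem M t X -> Len M s ls -> Len M t lt -> pair M s jn < lt ->
  i0 < ls -> Entry M s i0 o0 -> mem M (pair M jn i0) F -> KB M s t.
Proof.
  intros s t ls lt i0 jn Hs Ht Hls Hlt Hp Hi0 Ei0 Fi0.
  assert (Hslt : s < lt) by (apply (le_lt_trans M HM S0 _ (pair M s jn)); auto; apply (pair_ge1 M HM S0)).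
  assert (Hjlt : jn < lt) by (apply (le_lt_trans M HM S0 _ (pair M s jn)); auto; apply (pair_ge2 M HM S0)).
  assert (Hlslt : ls < lt) by (apply (le_lt_trans M HM S0 _ s); auto; eapply (len_le M HM S0); eauto).
  destruct (HXsub t Ht) as [_ [lt' [Hlt' [U1 U2]]]]. rewrite (len_unique M HM S0 _ _ _ Hlt' Hlt) in *.
  assert (Hlt_i : forall i, i < ls -> i < lt) by (intros; eapply (lt_trans M HM S0); eauto).
  destruct (lnp M HM S0 (KBF O) ltac:(unfold KBF; d04) (scons s (scons t (scons ls (ee M)))) EX) as [i [Hi Hmin]].
  { exists i0. rewrite KBF_sat. split; auto. split; auto. intro E. apply (U2 i0 (Hlt_i i0 Hi0)) in E; auto.
    exists jn. auto. }
  rewrite KBF_sat in Hi. destruct Hi as [Hils [Es Nt]].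
  exists ls, lt. split; auto. split; auto. right. exists i. split; auto. split; auto.
  split.
  - destruct (entry_ex M HM S0 t lt i Hlt (Hlt_i i Hils)) as [w Ew]. exists o0, w. split; auto. split; auto.
    apply (ne0_lt M HM S0). intro E; subst; auto.
  - assert (Z : forall j, j < i -> Entry M s j o0 -> Entry M t j o0).
    { intros j Hj Ej. apply NNPP. intro Nj. apply (Hmin j Hj). rewrite KBF_sat. split; auto.
      eapply (lt_trans M HM S0); eauto. }
    intros j v Hj. assert (Hjls : j < ls) by (eapply (lt_trans M HM S0); eauto).
    split.
    + intro Ev. destruct (classic (v = o0)) as [->|Hv]. apply Z; auto. apply (wext s t ls lt); auto.
    + intro Ev. destruct (entry_ex M HM S0 s ls j Hls Hjls) as [v' Ev'].
      destruct (classic (v' = o0)) as [->|Hv'].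
      * rewrite (entry_fun M HM S0 _ _ _ _ Ev (Z j Hj Ev')). auto.
      * rewrite (entry_fun M HM S0 _ _ _ _ Ev (wext s t ls lt Hs Ht Hls Hlt Hslt j v' Hjls Ev' Hv')). auto.
Qed.

Lemma good : GoodSeq M X Y.
Proof.
  assert (Hd : forall n m s t, n < m -> mem M (pair M n s) Y -> mem M (pair M m t) Y -> KB M s t).
  { intros n m s t Hnm Hs Ht. destruct (pairs n m s t Hnm Hs Ht) as [jn [ls [lt [i0 [HsX [HtX [Hls [Hlt [Hp [Hi0 [Ei0 Fi0]]]]]]]]]]].
    eapply kb; eauto. }
  assert (Hex : forall n, exists s, mem M (pair M n s) Y).
  { intro n. destruct (hist_ex M HM F X HF HXinf HXsub HR n) as [h Hh]. pose proof Hh as [Hl [H0 Hst]].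
    destruct (Hst n (lt_succ M HM S0 _)) as [x [y [Ex [Ey [Sy _]]]]].
    destruct Sy as [t [j [_ [_ [Ey' _]]]]]. subst y. exists t. apply Ymem. eauto. }
  split; [split|split; [|split; [|split; [|split]]]].
  - exact Hex.
  - intros n s s' Hs Hs'. rewrite Ymem in Hs, Hs'. destruct Hs as [h1 [j1 [Hh1 E1]]]. destruct Hs' as [h2 [j2 [Hh2 E2]]].
    assert (E : pair M s j1 = pair M s' j2).
    { eapply (hist_agree M HM F X HF HXinf HXsub HR h1 h2 n n); eauto; apply (lt_succ M HM S0). }
    apply (pair_inj M HM S0) in E. tauto.
  - intros n s Hs. rewrite Ymem in Hs. destruct Hs as [h [j [Hh Ej]]]. pose proof Hh as [Hl [H0 Hst]].
    destruct (Hst n (lt_succ M HM S0 _)) as [x [y [Ex [Ey [Sy _]]]]].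
    rewrite (entry_fun M HM S0 _ _ _ _ Ey Ej) in Sy. apply step_unpack in Sy. tauto.
  - intros n m s t ls lt Hnm Hs Ht Hls Hlt.
    destruct (pairs n m s t Hnm Hs Ht) as [jn [ls' [lt' [i0 [HsX [HtX [Hls' [Hlt' [Hp _]]]]]]]]].
    rewrite (len_unique M HM S0 _ _ _ Hls Hls'), (len_unique M HM S0 _ _ _ Hlt Hlt').
    eapply (le_lt_trans M HM S0 _ s). eapply (len_le M HM S0); eauto.
    eapply (le_lt_trans M HM S0); eauto. apply (pair_ge1 M HM S0).
  - intros n m s t Hnm Hs Ht.
    destruct (pairs n m s t Hnm Hs Ht) as [jn [ls [lt [i0 [HsX [HtX [Hls [Hlt [Hp _]]]]]]]]].
    assert (Hslt : s < lt) by (apply (le_lt_trans M HM S0 _ (pair M s jn)); auto; apply (pair_ge1 M HM S0)).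
    exists ls, lt. split; auto. split; auto. split.
    + apply (lt_le M HM S0). eapply (le_lt_trans M HM S0); eauto. eapply (len_le M HM S0); eauto.
    + intros i v Hi Ev Hv. apply (wext s t ls lt); auto.
  - intro k. destruct (Hex (k + o1)) as [s Hs]. destruct (Hex (k + o1 + o1)) as [t Ht].
    exists (k + o1), s, t. split. apply (lt_succ M HM S0). split; auto. split; auto.
    eapply Hd; eauto. apply (lt_succ M HM S0).
  - exact Hd.
Qed.
End Fin.


End P8.
Import P8.

Theorem lemma22 :
  forall M : L2str, RCA0 M ->
  forall F : Set2 M, InjFun M F ->
    RangeExists M F \/
    (forall X : Set2 M, Infinite M X -> Subset M X (InTf M F) ->
       exists Y : Set2 M, GoodSeq M X Y).
Proof.
  intros M HM F HF. destruct (classic (RangeExists M F)) as [H|H]; [left; auto|right].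
  intros X HXinf HXsub. destruct (Y_ex M HM F X HF HXinf HXsub H) as [Y HY].
  exists Y. apply (good M HM F X HF HXinf HXsub H Y HY).
Qed.
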